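(* Let $\hat{\mathbf{u}}(\hat{\mathbf{x}},t)$, $\hat{\mathbf{x}}=(x_1,x_2)\in\mathbb{R}^2$, be a solution of the 2D incompressible Navier–Stokes equations $\partial_t\hat{\mathbf{u}}+(\nabla_{\hat{\mathbf{x}}}\hat{\mathbf{u}})\hat{\mathbf{u}}=-\rho^{-1}\nabla_{\hat{\mathbf{x}}}p+\nu\Delta_{\hat{\mathbf{x}}}\hat{\mathbf{u}}$, $\nabla_{\hat{\mathbf{x}}}\cdot\hat{\mathbf{u}}=0$, with constant density $\rho$, viscosity $\nu$, scalar vorticity $\hat{\omega}=\partial_{x_1}\hat u_2-\partial_{x_2}\hat u_1$ and planar flow map $\hat{\mathbf{F}}_{t_0}^{t}$. View it as the 3D incompressible Navier–Stokes solution $\mathbf{u}(\mathbf{x},t)=(\hat{\mathbf{u}}(\hat{\mathbf{x}},t),\hat{\omega}(\hat{\mathbf{x}},t))$, $\mathbf{x}=(\hat{\mathbf{x}},x_3)$, with flow map $\mathbf{F}_{t_0}^t$. Then the $\hat{\mathbf{x}}$-components of the material and instantaneous barrier equations for linear momentum, $\mathbf{x}_0'=\nu\rho\frac{1}{t_1-t_0}\int_{t_0}^{t_1}(\mathbf{F}_{t_0}^{t})^{*}\Delta\mathbf{u}\,dt$ and $\mathbf{x}'=\nu\rho\Delta\mathbf{u}(\mathbf{x},t)$, are autonomous Hamiltonian systems of the form $$\hat{\mathbf{x}}_0'=\nu\rho\,\mathbf{J}\nabla_0\,\overline{\hat{\omega}\big(\hat{\mathbf{F}}_{t_0}^{t}(\hat{\mathbf{x}}_0),t\big)},\qquad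 \hat{\mathbf{x}}'=\nu\rho\,\mathbf{J}\nabla\hat{\omega}(\hat{\mathbf{x}},t),$$ respectively. Therefore, time-$t_0$ positions of material active barriers to linear momentum transport are structurally stable level curves of the time-averaged Lagrangian vorticity $\overline{\hat{\omega}(\hat{\mathbf{F}}_{t_0}^{t}(\hat{\mathbf{x}}_0),t)}$, and instantaneous active barriers to linear momentum transport at time $t$ are structurally stable level curves of $\hat{\omega}(\hat{\mathbf{x}},t)$.
   Context: $\mathbf{J}=\begin{pmatrix}0&1\\-1&0\end{pmatrix}$. The overbar denotes time average along trajectories: $\overline{v}(\mathbf{x}_0)=\frac{1}{t_1-t_0}\int_{t_0}^{t_1}v(\mathbf{x}_0,t)\,dt$; $\nabla_0$ is the gradient with respect to $\hat{\mathbf{x}}_0$. The pull-back is $(\mathbf{F}_{t_0}^{t})^{*}\mathbf{w}(\mathbf{x}_0)=[\nabla\mathbf{F}_{t_0}^{t}(\mathbf{x}_0)]^{-1}\mathbf{w}(\mathbf{F}_{t_0}^{t}(\mathbf{x}_0),t)$; primes denote derivatives with respect to a parameter $s$ along trajectories. A material (resp. instantaneous) active barrier is a material surface whose time-$t_0$ position is a structurally stable (persistent under small smooth perturbations of $\mathbf{u}$) 2D invariant manifold of the material (resp. instantaneous, at fixed $t$) barrier equation; in this symmetric setting such barriers are products of planar curves with the $x_3$-direction, and the statement refers to these planar curves. *)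

(* Defs.v *)
From Stdlib Require Import Reals.
From Coquelicot Require Import Coquelicot.
From mathcomp Require Import all_boot all_algebra.
From mathcomp Require Import Rstruct.

Set Implicit Arguments.
Unset Strict Implicit.
Unset Printing Implicit Defensive.

Import GRing.Theory.
Local Open Scope ring_scope.

Definition i0 : 'I_2 := ord0.
Definition i1 : 'I_2 := ord_max.
Definition j0 : 'I_1 := ord0.

Definition pdir {n} (j : 'I_n) (f : 'cV[R]_n -> R) (x : 'cV[R]_n) : R :=
  Derive (fun s : R => f (x + s *: delta_mx j j0)) 0%R.

Definition grad {n} (f : 'cV[R]_n -> R) (x : 'cV[R]_n) : 'cV[R]_n :=
  \col_i pdir i f x.
Definition lap {n} (f : 'cV[R]_n -> R) (x : 'cV[R]_n) : R :=
  \sum_j pdir j (pdir j f) x.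
Definition lapv {n} (U : 'cV[R]_n -> R -> 'cV[R]_n) (x : 'cV[R]_n) (t : R)
  : 'cV[R]_n := \col_i lap (fun y => U y t i j0) x.
Definition jac {n} (G : 'cV[R]_n -> 'cV[R]_n) (x : 'cV[R]_n) : 'M[R]_n :=
  \matrix_(i, j) pdir j (fun y => G y i j0) x.

Definition Jmx : 'M[R]_2 :=
  \matrix_(i, j) (if (val i == 0%N) && (val j == 1%N) then 1
                  else if (val i == 1%N) && (val j == 0%N) then -1 else 0).

(* partial derivative in space direction (Some i) or in time (None) *)
Definition pdx {n} (d : option 'I_n) (h : 'cV[R]_n -> R -> R)
  : 'cV[R]_n -> R -> R :=
  fun x t => match d with
             | Some i => Derive (fun s : R => h (x + s *: delta_mx i j0) t) 0%R
             | None => Derive (fun s : R => h x s) t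
             end.
Definition ex_pdx {n} (d : option 'I_n) (h : 'cV[R]_n -> R -> R)
  (x : 'cV[R]_n) (t : R) : Prop :=
  match d with
  | Some i => ex_derive (fun s : R => h (x + s *: delta_mx i j0) t) 0%R
  | None => ex_derive (fun s : R => h x s) t
  end.
Fixpoint iterD {n} (l : seq (option 'I_n)) (h : 'cV[R]_n -> R -> R)
  : 'cV[R]_n -> R -> R :=
  match l with
  | [::] => h
  | d :: l' => pdx d (iterD l' h)
  end.
Definition jcont {n} (h : 'cV[R]_n -> R -> R) : Prop :=
  forall (x : 'cV[R]_n) (t eps : R), (0 < eps)%R ->
    exists delta : R, (0 < delta)%R /\
      forall (y : 'cV[R]_n) (s : R),
        (forall i, (Rabs (y i j0 - x i j0) < delta)%R) ->
        (Rabs (s - t) < delta)%R ->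
        (Rabs (h y s - h x t) < eps)%R.
Definition smooth {n} (h : 'cV[R]_n -> R -> R) : Prop :=
  forall l : seq (option 'I_n),
    jcont (iterD l h) /\ forall d x t, ex_pdx d (iterD l h) x t.

Definition incompressible2 (u : 'cV[R]_2 -> R -> 'cV[R]_2) : Prop :=
  forall x t, pdir i0 (fun y => u y t i0 j0) x + pdir i1 (fun y => u y t i1 j0) x = 0.

Definition navier_stokes2 (rho nu : R) (u : 'cV[R]_2 -> R -> 'cV[R]_2)
  (p : 'cV[R]_2 -> R -> R) : Prop :=
  forall x t (i : 'I_2),
    Derive (fun s : R => u x s i j0) t
      + \sum_(j < 2) pdir j (fun y => u y t i j0) x * u x t j j0
    = - (rho^-1 * pdir i (fun y => p y t) x) + nu * lap (fun y => u y t i j0) x.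

Definition vort (u : 'cV[R]_2 -> R -> 'cV[R]_2) (y : 'cV[R]_2) (t : R) : R :=
  pdir i0 (fun z => u z t i1 j0) y - pdir i1 (fun z => u z t i0 j0) y.

Definition proj3 (x : 'cV[R]_3) : 'cV[R]_2 :=
  \col_(i < 2) x (widen_ord (isT : (2 <= 3)%N) i) j0.

Definition lift3 (u : 'cV[R]_2 -> R -> 'cV[R]_2) (x : 'cV[R]_3) (t : R)
  : 'cV[R]_3 :=
  \col_(i < 3) (if val i == 0%N then u (proj3 x) t i0 j0
                else if val i == 1%N then u (proj3 x) t i1 j0
                else vort u (proj3 x) t).

Definition flow_map {n} (t0 : R) (U : 'cV[R]_n -> R -> 'cV[R]_n)
  (F : R -> 'cV[R]_n -> 'cV[R]_n) : Prop :=
  (forall x, F t0 x = x) /\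
  (forall x t i, is_derive (fun s : R => F s x i j0) t (U (F t x) t i j0)) /\
  (forall i, smooth (fun x t => F t x i j0)).

Definition tavg (t0 t1 : R) (g : R -> R) : R := (/ (t1 - t0) * RInt g t0 t1)%R.

Definition pullback {n} (F : R -> 'cV[R]_n -> 'cV[R]_n)
  (w : 'cV[R]_n -> R -> 'cV[R]_n) (t : R) (x0 : 'cV[R]_n) : 'cV[R]_n :=
  invmx (jac (F t) x0) *m w (F t x0) t.

Definition material_barrier_field {n} (rho nu t0 t1 : R)
  (F : R -> 'cV[R]_n -> 'cV[R]_n) (U : 'cV[R]_n -> R -> 'cV[R]_n)
  (x0 : 'cV[R]_n) : 'cV[R]_n :=
  (nu * rho) *: \col_i tavg t0 t1 (fun t => pullback F (lapv U) t x0 i j0).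

Definition inst_barrier_field {n} (rho nu t : R)
  (U : 'cV[R]_n -> R -> 'cV[R]_n) (x : 'cV[R]_n) : 'cV[R]_n :=
  (nu * rho) *: lapv U x t.

Definition trajectory {n} (B : 'cV[R]_n -> 'cV[R]_n) (gamma : R -> 'cV[R]_n) : Prop :=
  forall s i, is_derive (fun r : R => gamma r i j0) s (B (gamma s) i j0).

(* Main.v *)
Require Import Defs.
From Stdlib Require Import Reals Lra.
From Coquelicot Require Import Coquelicot.
From mathcomp Require Import all_boot all_algebra.
From mathcomp Require Import Rstruct.
Import GRing.Theory.
Set Implicit Arguments.
Unset Strict Implicit.
Unset Printing Implicit Defensive.
Local Open Scope ring_scope.

Definition sh {n} (x : 'cV[R]_n) (j : 'I_n) (s : R) : 'cV[R]_n := x + s *: delta_mx j j0.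
Definition pt (a b : R) : 'cV[R]_2 := \col_i (if val i == 0%N then a else b).

Lemma ord2P (P : 'I_2 -> Prop) : P i0 -> P i1 -> forall i, P i.
Proof. move=> H0 H1 [[|[|k]] Hk] //. 
- by have -> : Ordinal Hk = i0 by apply: val_inj.
- by have -> : Ordinal Hk = i1 by apply: val_inj.
Qed.

Lemma shE {n} (x : 'cV[R]_n) j s i : sh x j s i j0 = (x i j0 + (if i == j then s else 0))%R.
Proof. rewrite /sh !mxE /=; case: (i == j) => /=; rewrite ?mulr1 ?mulr0 //. Qed.

Lemma ptE0 a b : pt a b i0 j0 = a. Proof. by rewrite mxE. Qed.
Lemma ptE1 a b : pt a b i1 j0 = b. Proof. by rewrite mxE. Qed.

Lemma pt_eta (x : 'cV[R]_2) : pt (x i0 j0) (x i1 j0) = x.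
Proof. apply/matrixP => i j; rewrite (ord1 j) mxE; move: i; apply: ord2P => //. Qed.

Lemma pt_sh0 a b s : sh (pt a b) i0 s = pt (a + s)%R b.
Proof. apply/matrixP => i j; rewrite (ord1 j); move: i; apply: ord2P; by rewrite shE !mxE /= ?addr0. Qed.
Lemma pt_sh1 a b s : sh (pt a b) i1 s = pt a (b + s)%R.
Proof. apply/matrixP => i j; rewrite (ord1 j); move: i; apply: ord2P; by rewrite shE !mxE /= ?addr0. Qed.
Delimit Scope R_scope with Re.
Delimit Scope ring_scope with ring.

Section Calc.
Local Open Scope R_scope.

Lemma Derive_shift (g : R -> R) a : Derive (fun s => g (a + s)) 0 = Derive g a.
Proof.
rewrite /Derive; congr real; apply: Lim_ext => h.
by rewrite Rplus_0_l Rplus_0_r.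
Qed.

Lemma ex_derive_shift (g : R -> R) a : ex_derive (fun s => g (a + s)) 0 <-> ex_derive g a.
Proof.
split => H.
- have := @ex_derive_comp _ _ (fun s => g (a + s)) (fun z => z - a) a.
  rewrite Rminus_diag; move/(_ H) => H2.
  apply: (ex_derive_ext _ _ _ _ (H2 _)) => [t|]; first by congr g; ring.
  by auto_derive.
- have := @ex_derive_comp _ _ g (fun z => a + z) 0.
  rewrite Rplus_0_r; move/(_ H) => H2; apply: H2; by auto_derive.
Qed.

Definition ev {n} (d : option 'I_n) : 'cV[R]_n := if d is Some i then delta_mx i j0 else 0%ring.
Definition et {n} (d : option 'I_n) : R := if d is Some _ then 0 else 1.

Lemma pdxE {n} d (H : 'cV[R]_n -> R -> R) x t :
  pdx d H x t = Derive (fun r : R => H (x + r *: ev d)%ring (t + r * et d)) 0.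
Proof.
case: d => [i|] /=.
- by apply: Derive_ext => r; rewrite Rmult_0_r Rplus_0_r.
- rewrite -Derive_shift; apply: Derive_ext => r.
  by rewrite scaler0 addr0 Rmult_1_r.
Qed.

Lemma ex_pdxE {n} d (H : 'cV[R]_n -> R -> R) x t :
  ex_pdx d H x t <-> ex_derive (fun r : R => H (x + r *: ev d)%ring (t + r * et d)) 0.
Proof.
case: d => [i|] /=.
- by split; apply: ex_derive_ext => r; rewrite Rmult_0_r Rplus_0_r.
- rewrite -ex_derive_shift.
  by split; apply: ex_derive_ext => r; rewrite scaler0 addr0 Rmult_1_r.
Qed.

End Calc.

Section Slice.
Local Open Scope R_scope.
Variables (n : nat) (x : 'cV[R]_n) (t : R) (d1 d2 : option 'I_n).
Definition Xs a b : 'cV[R]_n := (x + a *: ev d1 + b *: ev d2)%ring.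
Definition Ts a b : R := t + a * et d1 + b * et d2.
Definition gsl (H : 'cV[R]_n -> R -> R) a b := H (Xs a b) (Ts a b).

Lemma gsl_D1 H a b : Derive (fun z => gsl H z b) a = pdx d1 H (Xs a b) (Ts a b).
Proof.
rewrite pdxE -Derive_shift; apply: Derive_ext => r; rewrite /gsl /Xs /Ts; congr H.
- by apply/matrixP => i j; rewrite !mxE ?mulr1n ?mulr0n -?RplusE -?RmultE -?RoppE -?RminusE -?R0E -?R1E; ring.
- ring.
Qed.
Lemma gsl_ex1 H a b : ex_derive (fun z => gsl H z b) a <-> ex_pdx d1 H (Xs a b) (Ts a b).
Proof.
rewrite ex_pdxE -ex_derive_shift; split; apply: ex_derive_ext => r; rewrite /gsl /Xs /Ts; congr H.
- by apply/matrixP => i j; rewrite !mxE ?mulr1n ?mulr0n -?RplusE -?RmultE -?RoppE -?RminusE -?R0E -?R1E; ring.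
- ring.
- by apply/matrixP => i j; rewrite !mxE ?mulr1n ?mulr0n -?RplusE -?RmultE -?RoppE -?RminusE -?R0E -?R1E; ring.
- ring.
Qed.
Lemma gsl_D2 H a b : Derive (fun z => gsl H a z) b = pdx d2 H (Xs a b) (Ts a b).
Proof.
rewrite pdxE -Derive_shift; apply: Derive_ext => r; rewrite /gsl /Xs /Ts; congr H.
- by apply/matrixP => i j; rewrite !mxE ?mulr1n ?mulr0n -?RplusE -?RmultE -?RoppE -?RminusE -?R0E -?R1E; ring.
- ring.
Qed.
Lemma gsl_ex2 H a b : ex_derive (fun z => gsl H a z) b <-> ex_pdx d2 H (Xs a b) (Ts a b).
Proof.
rewrite ex_pdxE -ex_derive_shift; split; apply: ex_derive_ext => r; rewrite /gsl /Xs /Ts; congr H.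
- by apply/matrixP => i j; rewrite !mxE ?mulr1n ?mulr0n -?RplusE -?RmultE -?RoppE -?RminusE -?R0E -?R1E; ring.
- ring.
- by apply/matrixP => i j; rewrite !mxE ?mulr1n ?mulr0n -?RplusE -?RmultE -?RoppE -?RminusE -?R0E -?R1E; ring.
- ring.
Qed.

Lemma ev_bound (d : option 'I_n) i : Rabs (ev d i j0) <= 1.
Proof.
case: d => [k|] /=; rewrite !mxE /=; last by rewrite Rabs_R0; lra.
case: (i == k); case: (j0 == j0) => /=; rewrite ?Rabs_R1 ?Rabs_R0; lra.
Qed.
Lemma et_bound (d : option 'I_n) : Rabs (et d) <= 1.
Proof. case: d => [k|] /=; rewrite ?Rabs_R1 ?Rabs_R0; lra. Qed.

Lemma jcontE (H : 'cV[R]_n -> R -> R) : jcont H -> forall (y : 'cV[R]_n) s eps, 0 < eps -> exists delta, 0 < delta /\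
   forall (z : 'cV[R]_n) r, (forall i, Rabs (z i j0 - y i j0) < delta) -> Rabs (r - s) < delta -> Rabs (H z r - H y s) < eps.
Proof.
move=> HC y s eps He.
have [delta [/RltP Hd Hdel]] := HC y s eps (introT RltP He).
exists delta; split; first by [].
move=> z r Hz Hr; apply/RltP; apply: Hdel; last by apply/RltP.
by move=> i; apply/RltP.
Qed.

Lemma gsl_cont H a0 b0 : jcont H -> continuity_2d_pt (gsl H) a0 b0.
Proof.
move=> HC eps.
have [delta [Hd Hdel]] := jcontE HC (Xs a0 b0) (Ts a0 b0) (cond_pos eps).
have Hd2 : 0 < delta / 2 by lra.
exists (mkposreal _ Hd2) => a b /= Ha Hb.
apply: Hdel.
- move=> i; rewrite /Xs !mxE.
  have E : ((x i j0 + a * ev d1 i j0 + b * ev d2 i j0) - (x i j0 + a0 * ev d1 i j0 + b0 * ev d2 i j0))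
     = (a - a0) * ev d1 i j0 + (b - b0) * ev d2 i j0 by ring.
  rewrite -!RplusE -!RmultE E.
  have := Rabs_triang ((a - a0) * ev d1 i j0) ((b - b0) * ev d2 i j0).
  rewrite !Rabs_mult.
  have := ev_bound d1 i; have := ev_bound d2 i.
  have := Rabs_pos (ev d1 i j0); have := Rabs_pos (ev d2 i j0).
  have := Rabs_pos (a - a0); have := Rabs_pos (b - b0).
  nra.
- rewrite /Ts.
  have E : ((t + a * et d1 + b * et d2) - (t + a0 * et d1 + b0 * et d2))
     = (a - a0) * et d1 + (b - b0) * et d2 by ring.
  rewrite E.
  have := Rabs_triang ((a - a0) * et d1) ((b - b0) * et d2).
  rewrite !Rabs_mult.
  have := et_bound d1; have := et_bound d2.
  have := Rabs_pos (et d1); have := Rabs_pos (et d2).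
  have := Rabs_pos (a - a0); have := Rabs_pos (b - b0).
  nra.
Qed.

Lemma Xs00 : Xs 0 0 = x.
Proof. by rewrite /Xs !scale0r !addr0. Qed.
Lemma Ts00 : Ts 0 0 = t.
Proof. rewrite /Ts; ring. Qed.

End Slice.

Lemma smooth_iter {n} (H : 'cV[R]_n -> R -> R) (l : seq (option 'I_n)) : smooth H -> smooth (Defs.iterD l H).
Proof.
move=> HS l'; have E : Defs.iterD l' (Defs.iterD l H) = Defs.iterD (l' ++ l) H.
  by elim: l' => //= d l' ->.
by rewrite E; apply: HS.
Qed.

Lemma schwarz_smooth {n} (H : 'cV[R]_n -> R -> R) d1 d2 x t : smooth H ->
  pdx d1 (pdx d2 H) x t = pdx d2 (pdx d1 H) x t.
Proof.
move=> HS.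
have E1 : forall a b, Derive (fun z => Derive (fun w => gsl x t d1 d2 H z w) b) a
          = pdx d1 (pdx d2 H) (Xs x d1 d2 a b) (Ts t d1 d2 a b).
  move=> a b; rewrite -gsl_D1; apply: Derive_ext => z; by rewrite gsl_D2.
have E2 : forall a b, Derive (fun z => Derive (fun w => gsl x t d1 d2 H w z) a) b
          = pdx d2 (pdx d1 H) (Xs x d1 d2 a b) (Ts t d1 d2 a b).
  move=> a b; rewrite -gsl_D2; apply: Derive_ext => z; by rewrite gsl_D1.
have := @Schwarz (gsl x t d1 d2 H) 0 0.
rewrite E1 E2 Xs00 Ts00; apply.
- exists (mkposreal 1 Rlt_0_1) => a b _ _; split; [|split; [|split]].
  + apply/gsl_ex1; exact: ((HS [::]).2).
  + apply/gsl_ex2; exact: ((HS [::]).2).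
  + apply: (ex_derive_ext (fun z => gsl x t d1 d2 (pdx d2 H) z b)).
      by move=> z; rewrite gsl_D2.
    apply/gsl_ex1; exact: ((HS [:: d2]).2).
  + apply: (ex_derive_ext (fun z => gsl x t d1 d2 (pdx d1 H) a z)).
      by move=> z; rewrite gsl_D1.
    apply/gsl_ex2; exact: ((HS [:: d1]).2).
- apply: (continuity_2d_pt_ext (gsl x t d1 d2 (pdx d1 (pdx d2 H)))).
    by move=> a b; rewrite E1.
  apply: gsl_cont; exact: ((HS [:: d1; d2]).1).
- apply: (continuity_2d_pt_ext (gsl x t d1 d2 (pdx d2 (pdx d1 H)))).
    by move=> a b; rewrite E2.
  apply: gsl_cont; exact: ((HS [:: d2; d1]).1).
Qed.

Section C1.
Local Open Scope R_scope.

Lemma mvt_ex (f : R -> R) a b : (forall z, ex_derive f z) ->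
  exists c, Rmin a b <= c <= Rmax a b /\ f b - f a = Derive f c * (b - a).
Proof.
move=> Hf; apply: MVT_gen.
- move=> z _; exact: Derive_correct.
- move=> z _; apply/continuity_pt_filterlim; apply: ex_derive_continuous; exact: Hf.
Qed.

Lemma C1_diff (g : R -> R -> R) a b :
  (forall u v, ex_derive (fun z => g z v) u) -> (forall u v, ex_derive (fun z => g u z) v) ->
  continuity_2d_pt (fun u v => Derive (fun z => g z v) u) a b ->
  continuity_2d_pt (fun u v => Derive (fun z => g u z) v) a b ->
  differentiable_pt_lim g a b (Derive (fun z => g z b) a) (Derive (fun z => g a z) b).
Proof.
move=> H1 H2 C1 C2 eps.
have He2 : 0 < eps / 2 by have := cond_pos eps; lra.
have [d1 Hd1] := C1 (mkposreal _ He2).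
have [d2 Hd2] := C2 (mkposreal _ He2).
have Hd : 0 < Rmin d1 d2 by apply: Rmin_pos; [apply: cond_pos|apply: cond_pos].
exists (mkposreal _ Hd) => u v /= Hu Hv.
have Hu1 : Rabs (u - a) < d1 by have := Rmin_l d1 d2; lra.
have Hu2 : Rabs (u - a) < d2 by have := Rmin_r d1 d2; lra.
have Hv1 : Rabs (v - b) < d1 by have := Rmin_l d1 d2; lra.
have Hv2 : Rabs (v - b) < d2 by have := Rmin_r d1 d2; lra.
have [c [Hc Ec]] := mvt_ex a u (H1^~ v).
have [e [He Ee]] := mvt_ex b v (H2 a).
have Hca : Rabs (c - a) < d1.
  apply: Rle_lt_trans Hu1.
  move: Hc; rewrite /Rmin /Rmax; case: Rle_dec => _ Hc; split_Rabs; lra.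
have Heb : Rabs (e - b) < d2.
  apply: Rle_lt_trans Hv2.
  move: He; rewrite /Rmin /Rmax; case: Rle_dec => _ He; split_Rabs; lra.
have K1 := Hd1 c v Hca Hv1.
have K2 := Hd2 a e (ltac:(rewrite Rminus_diag Rabs_R0; apply: cond_pos)) Heb.
simpl in K1, K2.
have E : g u v - g a b - (Derive (fun z => g z b) a * (u - a) + Derive (fun z => g a z) b * (v - b))
   = (Derive (fun z => g z v) c - Derive (fun z => g z b) a) * (u - a)
     + (Derive (fun z => g a z) e - Derive (fun z => g a z) b) * (v - b).
  simpl in Ec, Ee.
  have -> : g u v - g a b = (g u v - g a v) + (g a v - g a b) by ring.
  rewrite Ec Ee; ring.
rewrite E.
apply: Rle_trans (Rabs_triang _ _) _.
rewrite !Rabs_mult.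
have Mu := Rmax_l (Rabs (u - a)) (Rabs (v - b)).
have Mv := Rmax_r (Rabs (u - a)) (Rabs (v - b)).
have := Rabs_pos (u - a); have := Rabs_pos (v - b).
have := Rabs_pos (Derive (fun z => g z v) c - Derive (fun z => g z b) a).
have := Rabs_pos (Derive (fun z => g a z) e - Derive (fun z => g a z) b).
nra.
Qed.
End C1.

Section Chain.
Local Open Scope R_scope.

Lemma pt_Xs a b : pt a b = Xs 0%ring (Some i0) (Some i1) a b.
Proof. apply/matrixP => i j; rewrite (ord1 j); move: i; apply: ord2P; by rewrite !mxE /= ?mulr1n ?mulr0n -?RplusE -?RmultE -?RoppE -?RminusE -?R0E -?R1E; ring. Qed.
Lemma Ts_pt t a b : Ts t (Some i0) (Some i1) a b = t.
Proof. rewrite /Ts /=; ring. Qed.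

Lemma D1_pt (H : 'cV[R]_2 -> R -> R) t a b :
  Derive (fun z => H (pt z b) t) a = pdx (Some i0) H (pt a b) t.
Proof. rewrite /= -Derive_shift; apply: Derive_ext => r; by rewrite -/(sh _ _ _) pt_sh0. Qed.
Lemma D2_pt (H : 'cV[R]_2 -> R -> R) t a b :
  Derive (fun z => H (pt a z) t) b = pdx (Some i1) H (pt a b) t.
Proof. rewrite /= -Derive_shift; apply: Derive_ext => r; by rewrite -/(sh _ _ _) pt_sh1. Qed.
Lemma ex1_pt (H : 'cV[R]_2 -> R -> R) t a b :
  ex_derive (fun z => H (pt z b) t) a <-> ex_pdx (Some i0) H (pt a b) t.
Proof. rewrite /= -ex_derive_shift; split; apply: ex_derive_ext => r; by rewrite -/(sh _ _ _) pt_sh0. Qed.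
Lemma ex2_pt (H : 'cV[R]_2 -> R -> R) t a b :
  ex_derive (fun z => H (pt a z) t) b <-> ex_pdx (Some i1) H (pt a b) t.
Proof. rewrite /= -ex_derive_shift; split; apply: ex_derive_ext => r; by rewrite -/(sh _ _ _) pt_sh1. Qed.

Lemma cont_pt (K : 'cV[R]_2 -> R -> R) t a b : jcont K ->
  continuity_2d_pt (fun a b => K (pt a b) t) a b.
Proof.
move=> HK; apply: (continuity_2d_pt_ext (gsl 0%ring t (Some i0) (Some i1) K)).
  by move=> u v; rewrite /gsl -pt_Xs Ts_pt.
exact: gsl_cont.
Qed.

Definition C1 (H : 'cV[R]_2 -> R -> R) :=
  (forall k x t, ex_pdx (Some k) H x t) /\ forall k, jcont (pdx (Some k) H).

Lemma smooth_C1 H : smooth H -> C1 H.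
Proof. move=> HS; split; [move=> k x t; exact: (HS [::]).2 | move=> k; exact: (HS [:: Some k]).1]. Qed.

Lemma diff_pt H t a b : C1 H ->
  differentiable_pt_lim (fun a b => H (pt a b) t) a b
    (pdx (Some i0) H (pt a b) t) (pdx (Some i1) H (pt a b) t).
Proof.
move=> [HE HC]; rewrite -D1_pt -D2_pt; apply: C1_diff.
- by move=> u v; apply/ex1_pt.
- by move=> u v; apply/ex2_pt.
- apply: (continuity_2d_pt_ext (fun a b => pdx (Some i0) H (pt a b) t)).
    by move=> u v; rewrite D1_pt.
  exact: cont_pt.
- apply: (continuity_2d_pt_ext (fun a b => pdx (Some i1) H (pt a b) t)).
    by move=> u v; rewrite D2_pt.
  exact: cont_pt.
Qed.

Lemma chain2 H t (c0 c1 : R -> R) s dc0 dc1 : C1 H ->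
  is_derive c0 s dc0 -> is_derive c1 s dc1 ->
  is_derive (fun r => H (pt (c0 r) (c1 r)) t) s
    (pdx (Some i0) H (pt (c0 s) (c1 s)) t * dc0 + pdx (Some i1) H (pt (c0 s) (c1 s)) t * dc1).
Proof.
move=> HC D0 D1; apply/is_derive_Reals.
apply: (derivable_pt_lim_comp_2d (fun a b => H (pt a b) t)).
- exact: diff_pt.
- by apply/is_derive_Reals.
- by apply/is_derive_Reals.
Qed.

End Chain.

From Stdlib Require Import FunctionalExtensionality.

Section Vort.
Local Open Scope R_scope.

Lemma jcontI {n} (H : 'cV[R]_n -> R -> R) : (forall (y : 'cV[R]_n) s eps, 0 < eps -> exists delta, 0 < delta /\
   forall (z : 'cV[R]_n) r, (forall i, Rabs (z i j0 - y i j0) < delta) -> Rabs (r - s) < delta -> Rabs (H z r - H y s) < eps) -> jcont H.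
Proof.
move=> HC y s eps /RltP He.
have [delta [Hd Hdel]] := HC y s eps He.
exists delta; split; first by apply/RltP.
move=> z r Hz /RltP Hr; apply/RltP; apply: Hdel => // i; by apply/RltP.
Qed.

Lemma jcont_minus {n} (F G : 'cV[R]_n -> R -> R) : jcont F -> jcont G -> jcont (fun x t => F x t - G x t).
Proof.
move=> HF HG; apply: jcontI => y s eps He.
have He2 : 0 < eps / 2 by lra.
have [d1 [Hd1 K1]] := jcontE HF y s He2.
have [d2 [Hd2 K2]] := jcontE HG y s He2.
exists (Rmin d1 d2); split; first by apply: Rmin_pos.
move=> z r Hz Hr.
have L1 : Rabs (F z r - F y s) < eps / 2.
  apply: K1; last by have := Rmin_l d1 d2; lra.
  move=> i; have := Hz i; have := Rmin_l d1 d2; lra.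
have L2 : Rabs (G z r - G y s) < eps / 2.
  apply: K2; last by have := Rmin_r d1 d2; lra.
  move=> i; have := Hz i; have := Rmin_r d1 d2; lra.
have -> : F z r - G z r - (F y s - G y s) = (F z r - F y s) - (G z r - G y s) by ring.
apply: Rle_lt_trans (Rabs_triang _ _) _; rewrite Rabs_Ropp; lra.
Qed.

Lemma pdx_minus {n} d (F G : 'cV[R]_n -> R -> R) x t : ex_pdx d F x t -> ex_pdx d G x t ->
  pdx d (fun x t => F x t - G x t) x t = pdx d F x t - pdx d G x t.
Proof. rewrite !ex_pdxE !pdxE => H1 H2; exact: Derive_minus. Qed.

Lemma ex_pdx_minus {n} d (F G : 'cV[R]_n -> R -> R) x t : ex_pdx d F x t -> ex_pdx d G x t ->
  ex_pdx d (fun x t => F x t - G x t) x t.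
Proof. rewrite !ex_pdxE => H1 H2; exact: ex_derive_minus. Qed.

Lemma pdx_opp {n} d (F : 'cV[R]_n -> R -> R) x t :
  pdx d (fun x t => - F x t) x t = - pdx d F x t.
Proof. rewrite !pdxE; exact: Derive_opp. Qed.

Lemma iterD_minus {n} (F G : 'cV[R]_n -> R -> R) l : smooth F -> smooth G ->
  Defs.iterD l (fun x t => F x t - G x t) = (fun x t => Defs.iterD l F x t - Defs.iterD l G x t).
Proof.
move=> HF HG; elim: l => //= d l ->.
apply: functional_extensionality => x; apply: functional_extensionality => t.
apply: pdx_minus; [exact: (HF l).2 | exact: (HG l).2].
Qed.

Lemma smooth_minus {n} (F G : 'cV[R]_n -> R -> R) : smooth F -> smooth G ->
  smooth (fun x t => F x t - G x t).
Proof.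
move=> HF HG l; rewrite iterD_minus //; split.
- apply: jcont_minus; [exact: (HF l).1 | exact: (HG l).1].
- move=> d x t; apply: ex_pdx_minus; [exact: (HF l).2 | exact: (HG l).2].
Qed.

Variable u : 'cV[R]_2 -> R -> 'cV[R]_2.
Definition U (i : 'I_2) := fun x t => u x t i j0.
Definition W := fun x t => vort u x t.

Lemma WE : W = fun x t => pdx (Some i0) (U i1) x t - pdx (Some i1) (U i0) x t.
Proof. by []. Qed.

Hypothesis Hs : forall i, smooth (U i).

Lemma smooth_W : smooth W.
Proof.
rewrite WE; apply: smooth_minus.
- exact: (smooth_iter [:: Some i0] (Hs i1)).
- exact: (smooth_iter [:: Some i1] (Hs i0)).
Qed.

Hypothesis Hinc : incompressible2 u.

Lemma incE : pdx (Some i0) (U i0) = fun x t => - pdx (Some i1) (U i1) x t.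
Proof.
apply: functional_extensionality => x; apply: functional_extensionality => t.
have H := Hinc x t.
change (pdx (Some i0) (U i0) x t + pdx (Some i1) (U i1) x t = 0) in H.
lra.
Qed.
Lemma incE' : pdx (Some i1) (U i1) = fun x t => - pdx (Some i0) (U i0) x t.
Proof.
apply: functional_extensionality => x; apply: functional_extensionality => t.
have H := Hinc x t.
change (pdx (Some i0) (U i0) x t + pdx (Some i1) (U i1) x t = 0) in H.
lra.
Qed.

Lemma lap2E (f : 'cV[R]_2 -> R) y : lap f y = pdir i0 (pdir i0 f) y + pdir i1 (pdir i1 f) y.
Proof.
rewrite /lap !big_ord_recl big_ord0 -RplusE addr0.
have -> : lift ord0 ord0 = i1 :> 'I_2 by apply: val_inj.
by [].
Qed.

Lemma lapU0 x t : lap (fun y => u y t i0 j0) x = - pdx (Some i1) W x t.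
Proof.
rewrite lap2E.
change (pdx (Some i0) (pdx (Some i0) (U i0)) x t + pdx (Some i1) (pdx (Some i1) (U i0)) x t
  = - pdx (Some i1) W x t).
rewrite incE pdx_opp WE pdx_minus; last first.
  exact: (Hs i0 [:: Some i1]).2.
  exact: (Hs i1 [:: Some i0]).2.
rewrite (schwarz_smooth (Some i0) (Some i1) x t (Hs i1)); ring.
Qed.

Lemma lapU1 x t : lap (fun y => u y t i1 j0) x = pdx (Some i0) W x t.
Proof.
rewrite lap2E.
change (pdx (Some i0) (pdx (Some i0) (U i1)) x t + pdx (Some i1) (pdx (Some i1) (U i1)) x t
  = pdx (Some i0) W x t).
rewrite incE' pdx_opp WE pdx_minus; last first.
  exact: (Hs i0 [:: Some i1]).2.
  exact: (Hs i1 [:: Some i0]).2.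
rewrite (schwarz_smooth (Some i0) (Some i1) x t (Hs i0)); ring.
Qed.

End Vort.

Section Three.
Local Open Scope R_scope.

Definition k0 : 'I_3 := ord0.
Definition k1 : 'I_3 := Ordinal (isT : (1 < 3)%N).
Definition k2 : 'I_3 := ord_max.

Lemma proj3E0 (x : 'cV[R]_3) : proj3 x i0 j0 = x k0 j0.
Proof. rewrite mxE; congr (x _ _); exact: val_inj. Qed.
Lemma proj3E1 (x : 'cV[R]_3) : proj3 x i1 j0 = x k1 j0.
Proof. rewrite mxE; congr (x _ _); exact: val_inj. Qed.

Lemma proj3_sh0 y s : proj3 (sh y k0 s) = sh (proj3 y) i0 s.
Proof. apply/matrixP => i j; rewrite (ord1 j); move: i; apply: ord2P; by rewrite [LHS]mxE !shE mxE. Qed.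
Lemma proj3_sh1 y s : proj3 (sh y k1 s) = sh (proj3 y) i1 s.
Proof. apply/matrixP => i j; rewrite (ord1 j); move: i; apply: ord2P; by rewrite [LHS]mxE !shE mxE. Qed.
Lemma proj3_sh2 y s : proj3 (sh y k2 s) = proj3 y.
Proof. apply/matrixP => i j; rewrite (ord1 j); move: i; apply: ord2P; by rewrite [LHS]mxE !shE mxE /= ?addr0. Qed.

Lemma pdir3_0 (G : 'cV[R]_2 -> R) : pdir k0 (fun z => G (proj3 z)) = fun y => pdir i0 G (proj3 y).
Proof.
apply: functional_extensionality => y; rewrite /pdir; apply: Derive_ext => s.
by rewrite -/(sh _ _ _) proj3_sh0.
Qed.
Lemma pdir3_1 (G : 'cV[R]_2 -> R) : pdir k1 (fun z => G (proj3 z)) = fun y => pdir i1 G (proj3 y).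
Proof.
apply: functional_extensionality => y; rewrite /pdir; apply: Derive_ext => s.
by rewrite -/(sh _ _ _) proj3_sh1.
Qed.
Lemma pdir3_2 (G : 'cV[R]_2 -> R) : pdir k2 (fun z => G (proj3 z)) = fun y => 0.
Proof.
apply: functional_extensionality => y; rewrite /pdir.
rewrite (Derive_ext _ (fun _ => G (proj3 y))) ?Derive_const // => s.
by rewrite -/(sh _ _ _) proj3_sh2.
Qed.

Lemma lap3 (G : 'cV[R]_2 -> R) x : lap (fun z => G (proj3 z)) x = lap G (proj3 x).
Proof.
rewrite lap2E /lap !big_ord_recl big_ord0.
have -> : lift ord0 ord0 = k1 by apply: val_inj.
have -> : lift ord0 (lift ord0 ord0) = k2 :> 'I_3 by apply: val_inj.
change (pdir k0 (pdir k0 (fun z => G (proj3 z))) x + (pdir k1 (pdir k1 (fun z => G (proj3 z))) x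
   + (pdir k2 (pdir k2 (fun z => G (proj3 z))) x + 0%ring))%ring = pdir i0 (pdir i0 G) (proj3 x) + pdir i1 (pdir i1 G) (proj3 x)).
rewrite pdir3_0 pdir3_1 pdir3_2 pdir3_0 pdir3_1.
rewrite [pdir k2 _ x]/pdir Derive_const.
rewrite ?mulr1n ?mulr0n -?RplusE -?RmultE -?RoppE -?RminusE -?R0E -?R1E; ring.
Qed.

Lemma Jmv0 (v : 'cV[R]_2) : (Jmx *m v) i0 j0 = v i1 j0.
Proof.
rewrite !mxE !big_ord_recl big_ord0 !mxE /=.
rewrite ?mulr1n ?mulr0n -?RplusE -?RmultE -?RoppE -?RminusE -?R0E -?R1E.
have -> : lift ord0 ord0 = i1 :> 'I_2 by apply: val_inj.
ring.
Qed.
Lemma Jmv1 (v : 'cV[R]_2) : (Jmx *m v) i1 j0 = - v i0 j0.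
Proof.
rewrite !mxE !big_ord_recl big_ord0 !mxE /= mulN1r mul0r !addr0 //.
Qed.

Lemma lift3E0 u y t : lift3 u y t k0 j0 = u (proj3 y) t i0 j0.
Proof. by rewrite mxE. Qed.
Lemma lift3E1 u y t : lift3 u y t k1 j0 = u (proj3 y) t i1 j0.
Proof. by rewrite mxE. Qed.
Lemma lift3E2 u y t : lift3 u y t k2 j0 = vort u (proj3 y) t.
Proof. by rewrite mxE. Qed.

Lemma lapv3_0 u x t : lapv (lift3 u) x t k0 j0 = lap (fun y => u y t i0 j0) (proj3 x).
Proof.
rewrite mxE -lap3; congr lap; apply: functional_extensionality => y; exact: lift3E0.
Qed.
Lemma lapv3_1 u x t : lapv (lift3 u) x t k1 j0 = lap (fun y => u y t i1 j0) (proj3 x).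
Proof.
rewrite mxE -lap3; congr lap; apply: functional_extensionality => y; exact: lift3E1.
Qed.

End Three.

Lemma proj3_pt (y : 'cV[R]_3) : proj3 y = pt (y k0 j0) (y k1 j0).
Proof. by rewrite -proj3E0 -proj3E1 pt_eta. Qed.

Lemma deriv0_const (f : R -> R) a b : (forall s, is_derive f s 0) -> f a = f b.
Proof.
move=> H.
have [c [_ E]] := mvt_ex a b (fun z => ex_intro _ _ (H z)).
move: E; rewrite (is_derive_unique _ _ _ (H c)) Rmult_0_l => E; apply: Rminus_diag_uniq_sym; exact: E.
Qed.

Lemma instE {n} rho nu t (V : 'cV[R]_n -> R -> 'cV[R]_n) x i :
  inst_barrier_field rho nu t V x i j0 = (nu * rho * lapv V x t i j0)%ring.
Proof. by rewrite /inst_barrier_field [LHS]mxE. Qed.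

Section Inst.
Variables (rho nu : R) (u : 'cV[R]_2 -> R -> 'cV[R]_2).
Hypothesis Hs : forall i, smooth (U u i).
Hypothesis Hinc : incompressible2 u.

Lemma inst_part t x : proj3 (inst_barrier_field rho nu t (lift3 u) x)
     = - (nu * rho) *: (Jmx *m grad (fun y => vort u y t) (proj3 x)).
Proof.
apply/matrixP => i j; rewrite (ord1 j); move: i; apply: ord2P.
- rewrite proj3E0 /inst_barrier_field mxE lapv3_0 lapU0 // mxE Jmv0 mxE.
  change (nu * rho * (- pdx (Some i1) (W u) (proj3 x) t) = - (nu * rho) * pdx (Some i1) (W u) (proj3 x) t).
  by rewrite mulrN mulNr.
- rewrite proj3E1 /inst_barrier_field mxE lapv3_1 lapU1 // mxE Jmv1 mxE.
  change (nu * rho * (pdx (Some i0) (W u) (proj3 x) t) = - (nu * rho) * - pdx (Some i0) (W u) (proj3 x) t).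
  by rewrite mulrNN.
Qed.

Lemma inst_traj t (gamma : R -> 'cV[R]_3) :
  trajectory (inst_barrier_field rho nu t (lift3 u)) gamma ->
  forall s1 s2, vort u (proj3 (gamma s1)) t = vort u (proj3 (gamma s2)) t.
Proof.
move=> Htr s1 s2.
rewrite !proj3_pt.
suff HH : forall s, is_derive (fun s => W u (pt (gamma s k0 j0) (gamma s k1 j0)) t) s 0.
  exact: (deriv0_const s1 s2 HH).
move=> s.
have HC := smooth_C1 (smooth_W Hs).
have D := chain2 t HC (Htr s k0) (Htr s k1).
rewrite -proj3_pt !instE lapv3_0 lapv3_1 lapU0 // lapU1 // in D.
set a := pdx (Some i0) _ _ _ in D; set b := pdx (Some i1) _ _ _ in D.
move: D; match goal with |- is_derive _ _ ?L -> _ => have -> : L = 0%Re end; last done.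
rewrite -?RplusE -?RmultE -?RoppE; ring.
Qed.
End Inst.

Section Flow2.
Local Open Scope R_scope.
Variables (t0 : R) (u : 'cV[R]_2 -> R -> 'cV[R]_2) (Fh : R -> 'cV[R]_2 -> 'cV[R]_2).
Hypothesis Hs : forall i, smooth (U u i).
Hypothesis Hinc : incompressible2 u.
Hypothesis Hfl : flow_map t0 u Fh.

Definition FH (i : 'I_2) := fun x t => Fh t x i j0.
Definition Amx t x i j := pdx (Some j) (FH i) x t.

Lemma FH_smooth i : smooth (FH i).
Proof. exact: (Hfl.2.2 i). Qed.

Lemma FH_time i : pdx None (FH i) = fun x t => U u i (Fh t x) t.
Proof.
apply: functional_extensionality => x; apply: functional_extensionality => t.
rewrite /=; apply: is_derive_unique; exact: (Hfl.2.1 x t i).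
Qed.

Lemma sh0 {n} (x : 'cV[R]_n) j : sh x j 0 = x.
Proof. by rewrite /sh scale0r addr0. Qed.

Lemma FH_space_der i j x t : is_derive (fun s => FH i (sh x j s) t) 0 (Amx t x i j).
Proof. apply: Derive_correct; exact: ((FH_smooth i) [::]).2 (Some j) x t. Qed.

Lemma Fh_pt t y : Fh t y = pt (FH i0 y t) (FH i1 y t).
Proof. by rewrite pt_eta. Qed.

Lemma dA i j x t : is_derive (fun t => Amx t x i j) t
   (pdx (Some i0) (U u i) (Fh t x) t * Amx t x i0 j + pdx (Some i1) (U u i) (Fh t x) t * Amx t x i1 j).
Proof.
have E : pdx None (pdx (Some j) (FH i)) x t = pdx (Some j) (pdx None (FH i)) x t.
  exact: schwarz_smooth (FH_smooth i).
have Ex : ex_derive (fun t => Amx t x i j) t.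
  exact: ((FH_smooth i) [:: Some j]).2 None x t.
have -> : (pdx (Some i0) (U u i) (Fh t x) t * Amx t x i0 j + pdx (Some i1) (U u i) (Fh t x) t * Amx t x i1 j)
   = Derive (fun t => Amx t x i j) t.
  change (Derive (fun t => Amx t x i j) t) with (pdx None (pdx (Some j) (FH i)) x t).
  rewrite E FH_time /=.
  symmetry; apply: is_derive_unique.
  have D := chain2 t (smooth_C1 (Hs i)) (FH_space_der i0 j x t) (FH_space_der i1 j x t).
  rewrite !sh0 -Fh_pt in D.
  apply: is_derive_ext D => s; by rewrite -Fh_pt.
exact: Derive_correct.
Qed.

Definition detA t x := Amx t x i0 i0 * Amx t x i1 i1 - Amx t x i0 i1 * Amx t x i1 i0.

Lemma A_t0 x i j : Amx t0 x i j = if i == j then 1 else 0.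
Proof.
rewrite /Amx /=.
rewrite (Derive_ext _ (fun s => x i j0 + if i == j then s else 0)); last first.
  move=> s; rewrite /FH -/(sh x j s) (Hfl.1 (sh x j s)) shE.
  by case: (i == j); rewrite -?RplusE.
case: (i == j).
- apply: is_derive_unique; auto_derive; [done|ring].
- by rewrite Rplus_0_r Derive_const.
Qed.

Lemma detA_const x t : detA t x = 1.
Proof.
have -> : 1 = detA t0 x.
  by rewrite /detA !A_t0 /=; ring.
suff HH : forall s, is_derive (fun s => detA s x) s 0 by exact: (deriv0_const t t0 HH).
move=> s.
have H := Hinc (Fh s x) s.
change (pdx (Some i0) (U u i0) (Fh s x) s + pdx (Some i1) (U u i1) (Fh s x) s = 0) in H.
have D := is_derive_minus _ _ _ _ _ (is_derive_mult _ _ _ _ _ (dA i0 i0 x s) (dA i1 i1 x s) (fun _ _ => Rmult_comm _ _))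
                           (is_derive_mult _ _ _ _ _ (dA i0 i1 x s) (dA i1 i0 x s) (fun _ _ => Rmult_comm _ _)).
move: D; match goal with |- is_derive _ _ ?L -> _ => have -> : L = 0 end.
  set a00 := pdx (Some i0) (U u i0) (Fh s x) s in H *.
  set a11 := pdx (Some i1) (U u i1) (Fh s x) s in H *.
  set a01 := pdx (Some i1) (U u i0) (Fh s x) s.
  set a10 := pdx (Some i0) (U u i1) (Fh s x) s.
  rewrite /minus /plus /mult /= (_ : forall y : R, Hierarchy.opp y = - y) //.
  have -> : a11 = - a00 by lra.
  ring.
move=> D; apply: is_derive_ext D => r //.
Qed.

End Flow2.

From Stdlib Require Import Classical.
Section Propagate.
Local Open Scope R_scope.

Variables (Z : R -> Prop) (g : R -> R).
Hypothesis HZ : forall t, Z t <-> g t = 0.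
Hypothesis Hg : forall t, continuity_pt g t.
Hypothesis Hloc : forall τ, Z τ -> exists eps, 0 < eps /\ forall t, Rabs (t - τ) < eps -> Z t.

Lemma closedZ t0 m : t0 <= m -> (forall r, t0 <= r < m -> Z r) -> Z t0 -> Z m.
Proof.
move=> Hm Hr Z0.
case: (Req_dec m t0) => [->//|Hne].
apply/HZ; apply: NNPP => Hgm.
have Hpos : 0 < Rabs (g m) by apply: Rabs_pos_lt.
have [eta [Heta Hc]] := (Hg m) _ Hpos.
set r := Rmax t0 (m - eta / 2).
have Hr1 : t0 <= r < m.
  split; first by apply: Rmax_l.
  rewrite /r /Rmax; case: Rle_dec => _; lra.
have Hd : D_x no_cond m r /\ Rabs (r - m) < eta.
  split; first by split; [done|lra].
  rewrite /r /Rmax; case: Rle_dec => H; rewrite Rabs_left; lra.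
have := Hc r Hd; rewrite /R_dist (proj1 (HZ r) (Hr r Hr1)).
rewrite /dist /= /R_dist Rminus_0_l Rabs_Ropp; lra.
Qed.

Lemma forwardZ t0 T : Z t0 -> t0 <= T -> Z T.
Proof.
move=> Z0 HT; apply: NNPP => NZ.
pose E := fun s => t0 <= s /\ forall r, t0 <= r <= s -> Z r.
have Eb : bound E.
  exists T => s [Hs Hr]; apply: Rnot_lt_le => Hlt; apply: NZ; apply: Hr; lra.
have Ee : exists s, E s by exists t0; split; [lra|move=> r Hr; have -> : r = t0 by lra].
have [m [Hub Hlub]] := completeness E Eb Ee.
have Hm0 : t0 <= m by apply: Hub; split; [lra|move=> r Hr; have -> : r = t0 by lra].
have Hbelow : forall r, t0 <= r < m -> Z r.
  move=> r Hr; apply: NNPP => Hnr.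
  have : m <= r.
    apply: Hlub => s [Hs Hsr]; apply: Rnot_lt_le => Hlt; apply: Hnr; apply: Hsr; lra.
  lra.
have Zm := closedZ Hm0 Hbelow Z0.
have [eps [He Hl]] := Hloc Zm.
have : E (m + eps / 2).
  split; first lra.
  move=> r Hr; case: (Rlt_le_dec r m) => H.
  - apply: Hbelow; lra.
  - apply: Hl; rewrite Rabs_pos_eq; lra.
move/Hub; lra.
Qed.
End Propagate.
Section Prop2.
Local Open Scope R_scope.

Lemma propagateZ (Z : R -> Prop) (g : R -> R) t0 :
  (forall t, Z t <-> g t = 0) -> (forall t, continuity_pt g t) ->
  (forall τ, Z τ -> exists eps, (0 < eps)%Re /\ forall t, (Rabs (t - τ) < eps)%Re -> Z t) ->
  Z t0 -> forall T, Z T.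
Proof.
move=> HZ Hg Hl Z0 T.
case: (Rle_dec t0 T) => H; first exact: (forwardZ HZ Hg Hl Z0 H).
suff : Z (- - T)%Re by rewrite Ropp_involutive.
apply: (@forwardZ (fun t => Z (- t)) (fun t => g (- t)) _ _ _ (- t0)%Re (- T)%Re); last lra.
4: by rewrite Ropp_involutive.
- by move=> t; apply: HZ.
- move=> t; apply: continuity_pt_comp; last exact: Hg.
  apply: continuity_pt_opp; exact: continuity_pt_id.
- move=> τ Zt; have [eps [He Hl']] := Hl _ Zt; exists eps; split => // t Ht.
  apply: Hl'; have -> : (- t - - τ = - (t - τ))%Re by ring.
  by rewrite Rabs_Ropp.
Qed.
End Prop2.

Section Gron.
Local Open Scope R_scope.

Lemma gron_side (g gd : R -> R) τ t C (sg : R) :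
  (sg = 1 \/ sg = -1) ->
  (forall r, Rmin τ t <= r <= Rmax τ t -> is_derive g r (gd r) /\ 0 <= g r /\ Rabs (gd r) <= C * g r) ->
  g τ = 0 -> sg * (t - τ) >= 0 -> g t = 0.
Proof.
move=> Hsg Hd Hg0 Hdir.
pose h := fun r => g r * exp (- sg * C * (r - τ)).
pose hd := fun r => (gd r - sg * C * g r) * exp (- sg * C * (r - τ)).
have Dh : forall r, Rmin τ t <= r <= Rmax τ t -> is_derive h r (hd r).
  move=> r Hr; have [D _] := Hd r Hr.
  rewrite /h /hd; auto_derive; first by exists (gd r).
  rewrite (is_derive_unique _ _ _ D) /Rminus; ring.
have [c [Hc E]] := MVT_gen h τ t hd (fun r Hr => Dh r (conj (Rlt_le _ _ (proj1 Hr)) (Rlt_le _ _ (proj2 Hr))))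
  (fun r Hr => proj2 (continuity_pt_filterlim _ _) (ex_derive_continuous _ _ (ex_intro _ _ (Dh r Hr)))).
have [_ [Hgc Hb]] := Hd c Hc.
have He := exp_pos (- sg * C * (c - τ)).
have He2 := exp_pos (- sg * C * (t - τ)).
have [_ [Hgt _]] := Hd t (conj (Rmin_r _ _) (Rmax_r _ _)).
have Hsign : sg * hd c <= 0.
  rewrite /hd.
  have : sg * (gd c - sg * C * g c) <= 0.
    move: Hb; case: Hsg => ->; split_Rabs; nra.
  move=> HH; have := Rmult_le_compat_r _ _ _ (Rlt_le _ _ He) HH; lra.
have : h t - h τ <= 0.
  rewrite E; have -> : hd c * (t - τ) = (sg * hd c) * (sg * (t - τ)).
    by case: Hsg => ->; ring.
  have Hdir' : sg * (t - τ) >= 0 := Hdir.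
  nra.
rewrite /h Hg0 Rmult_0_l Rminus_0_r => Hh.
apply: Rle_antisym => //; nra.
Qed.

Lemma gron_loc (g gd : R -> R) τ eps C :
  (forall r, Rabs (r - τ) < eps -> is_derive g r (gd r) /\ 0 <= g r /\ Rabs (gd r) <= C * g r) ->
  g τ = 0 -> forall t, Rabs (t - τ) < eps -> g t = 0.
Proof.
move=> Hd Hg0 t Ht.
have Hin : forall r, Rmin τ t <= r <= Rmax τ t -> Rabs (r - τ) < eps.
  move=> r; rewrite /Rmin /Rmax; case: Rle_dec => H Hr; move: Ht; split_Rabs; lra.
case: (Rle_dec τ t) => H.
- apply: (gron_side (sg := 1)) Hg0 _; [by left| |lra].
  by move=> r Hr; apply: Hd; apply: Hin.
- apply: (gron_side (sg := -1)) Hg0 _; [by right| |lra].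
  by move=> r Hr; apply: Hd; apply: Hin.
Qed.

End Gron.

Section Lip.
Local Open Scope R_scope.

Lemma between_close a b p c d : Rmin a b <= c <= Rmax a b -> Rabs (a - p) < d -> Rabs (b - p) < d -> Rabs (c - p) < d.
Proof. rewrite /Rmin /Rmax; case: Rle_dec => _ H; split_Rabs; lra. Qed.

Lemma pt_close y0 y1 p0 p1 d : Rabs (y0 - p0) < d -> Rabs (y1 - p1) < d ->
  forall i, Rabs (pt y0 y1 i j0 - pt p0 p1 i j0) < d.
Proof. move=> H0 H1; apply: ord2P; by rewrite !mxE. Qed.

Lemma loc_bound K p0 p1 τ : jcont K -> exists d, 0 < d /\ forall y0 y1 s,
  Rabs (y0 - p0) < d -> Rabs (y1 - p1) < d -> Rabs (s - τ) < d ->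
  Rabs (K (pt y0 y1) s) <= Rabs (K (pt p0 p1) τ) + 1.
Proof.
move=> HK; have [d [Hd Hdel]] := jcontE HK (pt p0 p1) τ Rlt_0_1.
exists d; split => // y0 y1 s H0 H1 Hs.
have := Hdel (pt y0 y1) s (pt_close H0 H1) Hs.
have := Rabs_triang_inv (K (pt y0 y1) s) (K (pt p0 p1) τ); lra.
Qed.

Lemma loc_lip H p0 p1 τ : C1 H -> exists d L, 0 < d /\ 0 <= L /\ forall y0 y1 z0 z1 s,
  Rabs (y0 - p0) < d -> Rabs (y1 - p1) < d -> Rabs (z0 - p0) < d -> Rabs (z1 - p1) < d ->
  Rabs (s - τ) < d ->
  Rabs (H (pt y0 y1) s - H (pt z0 z1) s) <= L * (Rabs (y0 - z0) + Rabs (y1 - z1)).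
Proof.
move=> [HE HC].
have [d0 [Hd0 B0]] := loc_bound p0 p1 τ (HC i0).
have [d1 [Hd1 B1]] := loc_bound p0 p1 τ (HC i1).
set L := Rabs (pdx (Some i0) H (pt p0 p1) τ) + 1 + (Rabs (pdx (Some i1) H (pt p0 p1) τ) + 1).
exists (Rmin d0 d1), L; split; first exact: Rmin_pos.
split; first by rewrite /L; have := Rabs_pos (pdx (Some i0) H (pt p0 p1) τ);
  have := Rabs_pos (pdx (Some i1) H (pt p0 p1) τ); lra.
move=> y0 y1 z0 z1 s Hy0 Hy1 Hz0 Hz1 Hs.
have m0 := Rmin_l d0 d1; have m1 := Rmin_r d0 d1.
have [c [Hc Ec]] := mvt_ex z0 y0 (fun z => proj2 (ex1_pt H s z y1) (HE i0 _ s)).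
have [e [He Ee]] := mvt_ex z1 y1 (fun z => proj2 (ex2_pt H s z0 z) (HE i1 _ s)).
rewrite D1_pt in Ec; rewrite D2_pt in Ee; cbv beta in Ec, Ee.
have Bc : Rabs (pdx (Some i0) H (pt c y1) s) <= Rabs (pdx (Some i0) H (pt p0 p1) τ) + 1.
  apply: B0; try lra.
  apply: (between_close Hc); lra.
have Be : Rabs (pdx (Some i1) H (pt z0 e) s) <= Rabs (pdx (Some i1) H (pt p0 p1) τ) + 1.
  apply: B1; try lra.
  apply: (between_close He); lra.
have -> : H (pt y0 y1) s - H (pt z0 z1) s = (H (pt y0 y1) s - H (pt z0 y1) s) + (H (pt z0 y1) s - H (pt z0 z1) s) by ring.
rewrite Ec Ee.
apply: Rle_trans (Rabs_triang _ _) _.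
rewrite !Rabs_mult /L.
have := Rabs_pos (y0 - z0); have := Rabs_pos (y1 - z1).
have := Rabs_pos (pdx (Some i0) H (pt c y1) s); have := Rabs_pos (pdx (Some i1) H (pt z0 e) s).
have := Rabs_pos (pdx (Some i0) H (pt p0 p1) τ); have := Rabs_pos (pdx (Some i1) H (pt p0 p1) τ).
have := Rmult_le_compat_r _ _ _ (Rabs_pos (y0 - z0)) Bc.
have := Rmult_le_compat_r _ _ _ (Rabs_pos (y1 - z1)) Be.
nra.
Qed.

End Lip.

Section Uniq.
Local Open Scope R_scope.

Lemma sumsq0 x y : x ^ 2 + y ^ 2 = 0 -> x = 0 /\ y = 0.
Proof.
move=> H; have h1 := pow2_ge_0 x; have h2 := pow2_ge_0 y.
split; apply: Rsqr_0_uniq; rewrite /Rsqr; [have : x ^ 2 = 0 by lra | have : y ^ 2 = 0 by lra]; rewrite /= Rmult_1_r; exact.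
Qed.

Lemma cont_eps (f : R -> R) τ : continuity_pt f τ -> forall e, 0 < e -> exists d, 0 < d /\
  forall r, Rabs (r - τ) < d -> Rabs (f r - f τ) < e.
Proof.
move=> Hc e He; have [d [Hd Hr]] := Hc e He.
exists d; split => // r Hrd.
case: (Req_dec r τ) => [->|Hne]; first by rewrite Rminus_diag Rabs_R0.
exact: (Hr r (conj (conj I (nesym Hne)) Hrd)).
Qed.

Lemma der_cont (f : R -> R) τ l : is_derive f τ l -> continuity_pt f τ.
Proof. move=> D; apply/continuity_pt_filterlim; apply: ex_derive_continuous; by exists l. Qed.

Variables (H0 H1 : 'cV[R]_2 -> R -> R).
Hypothesis (HC0 : C1 H0) (HC1 : C1 H1).
Variables (a0 a1 b0 b1 : R -> R).
Hypothesis Da0 : forall t, is_derive a0 t (H0 (pt (a0 t) (a1 t)) t).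
Hypothesis Da1 : forall t, is_derive a1 t (H1 (pt (a0 t) (a1 t)) t).
Hypothesis Db0 : forall t, is_derive b0 t (H0 (pt (b0 t) (b1 t)) t).
Hypothesis Db1 : forall t, is_derive b1 t (H1 (pt (b0 t) (b1 t)) t).

Let g t := (a0 t - b0 t)^2 + (a1 t - b1 t)^2.
Let gd t := 2 * (a0 t - b0 t) * (H0 (pt (a0 t) (a1 t)) t - H0 (pt (b0 t) (b1 t)) t)
          + 2 * (a1 t - b1 t) * (H1 (pt (a0 t) (a1 t)) t - H1 (pt (b0 t) (b1 t)) t).

Lemma Dg t : is_derive g t (gd t).
Proof.
rewrite /g /gd; auto_derive.
- repeat split; [exists (H0 (pt (a0 t) (a1 t)) t) | exists (H0 (pt (b0 t) (b1 t)) t)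
                | exists (H1 (pt (a0 t) (a1 t)) t) | exists (H1 (pt (b0 t) (b1 t)) t)]; by [].
- rewrite (is_derive_unique _ _ _ (Da0 t)) (is_derive_unique _ _ _ (Da1 t)).
  rewrite (is_derive_unique _ _ _ (Db0 t)) (is_derive_unique _ _ _ (Db1 t)); ring.
Qed.

Lemma loc_uniq τ : a0 τ = b0 τ -> a1 τ = b1 τ -> exists eps, 0 < eps /\
  forall t, Rabs (t - τ) < eps -> a0 t = b0 t /\ a1 t = b1 t.
Proof.
move=> E0 E1.
have [d0 [L0 [Hd0 [HL0 Lip0]]]] := loc_lip (a0 τ) (a1 τ) τ HC0.
have [d1 [L1 [Hd1 [HL1 Lip1]]]] := loc_lip (a0 τ) (a1 τ) τ HC1.
set d := Rmin d0 d1.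
have m9 : d <= d0 := Rmin_l _ _.
have m10 : d <= d1 := Rmin_r _ _.
have Hd : 0 < d by apply: Rmin_pos.
have [e1 [He1 Ca0]] := cont_eps (der_cont (Da0 τ)) Hd.
have [e2 [He2 Ca1]] := cont_eps (der_cont (Da1 τ)) Hd.
have [e3 [He3 Cb0]] := cont_eps (der_cont (Db0 τ)) Hd.
have [e4 [He4 Cb1]] := cont_eps (der_cont (Db1 τ)) Hd.
set eps := Rmin (Rmin d (Rmin e1 e2)) (Rmin e3 e4).
have m1 : eps <= Rmin d (Rmin e1 e2) := Rmin_l _ _.
have m2 : eps <= Rmin e3 e4 := Rmin_r _ _.
have Heps : 0 < eps by repeat apply: Rmin_pos.
have m3 := Rmin_l d (Rmin e1 e2); have m4 := Rmin_r d (Rmin e1 e2).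
have m5 := Rmin_l e1 e2; have m6 := Rmin_r e1 e2; have m7 := Rmin_l e3 e4; have m8 := Rmin_r e3 e4.
exists eps; split => //.
have Hg0 : g τ = 0 by rewrite /g E0 E1; ring.
have key : forall t, Rabs (t - τ) < eps -> g t = 0.
  apply: (gron_loc (gd := gd) (C := 4 * (L0 + L1))) Hg0 => r Hr.
  split; first exact: Dg.
  split; first by rewrite /g; have := pow2_ge_0 (a0 r - b0 r); have := pow2_ge_0 (a1 r - b1 r); lra.
  have A0 : Rabs (a0 r - a0 τ) < d by apply: Ca0; lra.
  have A1 : Rabs (a1 r - a1 τ) < d by apply: Ca1; lra.
  have B0 : Rabs (b0 r - a0 τ) < d by rewrite E0; apply: Cb0; lra.
  have B1 : Rabs (b1 r - a1 τ) < d by rewrite E1; apply: Cb1; lra.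
  have Hr' : Rabs (r - τ) < d by lra.
  have K0 := Lip0 (a0 r) (a1 r) (b0 r) (b1 r) r ltac:(lra) ltac:(lra) ltac:(lra) ltac:(lra) ltac:(lra).
  have K1 := Lip1 (a0 r) (a1 r) (b0 r) (b1 r) r ltac:(lra) ltac:(lra) ltac:(lra) ltac:(lra) ltac:(lra).
  rewrite /gd /g.
  set x0 := a0 r - b0 r in K0 K1 *; set x1 := a1 r - b1 r in K0 K1 *.
  set h0 := H0 _ r - H0 _ r in K0 *; set h1 := H1 _ r - H1 _ r in K1 *.
  apply: Rle_trans (Rabs_triang _ _) _.
  rewrite !Rabs_mult Rabs_pos_eq; last lra.
  have Q0 := Rabs_pos x0; have Q1 := Rabs_pos x1.
  have S0 : x0 ^ 2 = Rabs x0 * Rabs x0 by rewrite -Rabs_mult Rabs_pos_eq; [ring|nra].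
  have S1 : x1 ^ 2 = Rabs x1 * Rabs x1 by rewrite -Rabs_mult Rabs_pos_eq; [ring|nra].
  rewrite S0 S1.
  have P0 := Rmult_le_compat_l _ _ _ Q0 K0.
  have P1 := Rmult_le_compat_l _ _ _ Q1 K1.
  have T1 : 0 <= L1 * (Rabs x0 * (Rabs x0 + Rabs x1)) by apply: Rmult_le_pos => //; nra.
  have T2 : 0 <= L0 * (Rabs x1 * (Rabs x0 + Rabs x1)) by apply: Rmult_le_pos => //; nra.
  have T3 : 0 <= (L0 + L1) * ((Rabs x0 - Rabs x1) * (Rabs x0 - Rabs x1)) by apply: Rmult_le_pos; [lra | apply: Rle_0_sqr].
  nra.
move=> t Ht; have := key t Ht; rewrite /g => /sumsq0 [Hz0 Hz1].
split; lra.
Qed.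

Lemma ode_unique t0 : a0 t0 = b0 t0 -> a1 t0 = b1 t0 -> forall t, a0 t = b0 t /\ a1 t = b1 t.
Proof.
move=> E0 E1 t.
apply: (propagateZ (Z := fun t => a0 t = b0 t /\ a1 t = b1 t) (g := g) (t0 := t0)) => //.
- move=> r; rewrite /g; split; [case=> -> ->; ring | move=> /sumsq0 [Hz0 Hz1]; split; lra].
- move=> r; exact: der_cont (Dg r).
- move=> r [H0' H1']; exact: loc_uniq.
Qed.

End Uniq.

Section Comp.
Local Open Scope R_scope.

Lemma is_derive_shift (f : R -> R) s l : is_derive (fun r => f (s + r)) 0 l -> is_derive f s l.
Proof.
move=> D.
have D1 : is_derive (fun r => f (s + r)) (s - s) l by rewrite Rminus_diag.
have D2 : is_derive (fun z => z - s) s 1 by auto_derive; try ring.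
have := is_derive_comp (fun r => f (s + r)) (fun z => z - s) s l 1 D1 D2.
rewrite /scal /= /mult /= Rmult_1_l.
apply: is_derive_ext => r; congr f; ring.
Qed.

Lemma comp_cont2 (K : 'cV[R]_2 -> R -> R) (Phi : R -> R -> 'cV[R]_2) (T : R -> R -> R) a0 b0 :
  jcont K -> (forall i, continuity_2d_pt (fun a b => Phi a b i j0) a0 b0) -> continuity_2d_pt T a0 b0 ->
  continuity_2d_pt (fun a b => K (Phi a b) (T a b)) a0 b0.
Proof.
move=> HK HP HT eps.
have [d [Hd Hdel]] := jcontE HK (Phi a0 b0) (T a0 b0) (cond_pos eps).
have [e0 He0] := HP i0 (mkposreal _ Hd).
have [e1 He1] := HP i1 (mkposreal _ Hd).
have [e2 He2] := HT (mkposreal _ Hd).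
have Hm : 0 < Rmin e0 (Rmin e1 e2) by repeat apply: Rmin_pos; apply: cond_pos.
exists (mkposreal _ Hm) => a b /= Ha Hb.
have m1 := Rmin_l e0 (Rmin e1 e2); have m2 := Rmin_r e0 (Rmin e1 e2).
have m3 := Rmin_l e1 e2; have m4 := Rmin_r e1 e2.
apply: Hdel.
- apply: ord2P; [apply: He0 | apply: He1]; lra.
- apply: He2; lra.
Qed.

Lemma cont2d_snd (f : R -> R -> R) s t : continuity_2d_pt f s t -> continuous (fun v => f s v) t.
Proof.
move=> H; apply/continuity_pt_filterlim => e He.
have [d Hd] := H (mkposreal _ He).
exists d; split; first exact: cond_pos.
move=> v [_ Hv]; apply: Hd; last exact: Hv.
rewrite Rminus_diag Rabs_R0; exact: cond_pos.
Qed.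

Lemma cont2d_fst (f : R -> R -> R) s t : continuity_2d_pt f s t -> continuous (fun v => f v t) s.
Proof.
move=> H; apply/continuity_pt_filterlim => e He.
have [d Hd] := H (mkposreal _ He).
exists d; split; first exact: cond_pos.
move=> v [_ Hv]; apply: Hd; first exact: Hv.
rewrite Rminus_diag Rabs_R0; exact: cond_pos.
Qed.

End Comp.

Section Omega.
Local Open Scope R_scope.
Variables (t0 t1 : R) (u : 'cV[R]_2 -> R -> 'cV[R]_2) (Fh : R -> 'cV[R]_2 -> 'cV[R]_2).
Hypothesis Hs : forall i, smooth (U u i).
Hypothesis Hfl : flow_map t0 u Fh.

Definition fW y j s t := W u (Fh t (sh y j s)) t.
Definition GW y (j : 'I_2) t := pdx (Some i0) (W u) (Fh t y) t * Amx Fh t y i0 j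
                    + pdx (Some i1) (W u) (Fh t y) t * Amx Fh t y i1 j.

Lemma sh_sh {n} (y : 'cV[R]_n) j s r : sh (sh y j s) j r = sh y j (s + r).
Proof. by rewrite /sh scalerDl addrA. Qed.

Lemma fW_der y j s t : is_derive (fun z => fW y j z t) s (GW (sh y j s) j t).
Proof.
have D k : is_derive (fun z => FH Fh k (sh y j z) t) s (Amx Fh t (sh y j s) k j).
  apply: is_derive_shift; apply: is_derive_ext (FH_space_der Hfl k j (sh y j s) t) => r.
  by rewrite sh_sh.
have := chain2 t (smooth_C1 (smooth_W Hs)) (D i0) (D i1).
rewrite -Fh_pt /GW; apply: is_derive_ext => z; by rewrite /fW -Fh_pt.
Qed.

Lemma gsl_FH (H : 'cV[R]_2 -> R -> R) y j s t :
  gsl y 0 (Some j) None H s t = H (sh y j s) t.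
Proof.
rewrite /gsl /Xs /Ts /= scaler0 addr0; congr H; ring.
Qed.

Lemma Fh_cont i y j s t : continuity_2d_pt (fun s t => Fh t (sh y j s) i j0) s t.
Proof.
apply: (continuity_2d_pt_ext (gsl y 0 (Some j) None (FH Fh i))) => [a b|].
  by rewrite gsl_FH.
apply: gsl_cont; exact: ((FH_smooth Hfl i) [::]).1.
Qed.

Lemma Amx_cont k j y s t : continuity_2d_pt (fun s t => Amx Fh t (sh y j s) k j) s t.
Proof.
apply: (continuity_2d_pt_ext (gsl y 0 (Some j) None (pdx (Some j) (FH Fh k)))) => [a b|].
  by rewrite gsl_FH.
apply: gsl_cont; exact: ((FH_smooth Hfl k) [:: Some j]).1.
Qed.

Lemma compW_cont (K : 'cV[R]_2 -> R -> R) y j s t : jcont K ->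
  continuity_2d_pt (fun s t => K (Fh t (sh y j s)) t) s t.
Proof.
move=> HK; apply: (comp_cont2 (Phi := fun s t => Fh t (sh y j s)) (T := fun s t => t)) => //.
- move=> i; exact: Fh_cont.
- exact: continuity_2d_pt_id2.
Qed.

Lemma fW_cont y j s t : continuity_2d_pt (fun s t => fW y j s t) s t.
Proof. apply: compW_cont; exact: ((smooth_W Hs) [::]).1. Qed.

Lemma GW_cont y j s t : continuity_2d_pt (fun s t => GW (sh y j s) j t) s t.
Proof.
rewrite /GW; apply: continuity_2d_pt_plus; apply: continuity_2d_pt_mult.
- apply: compW_cont; exact: ((smooth_W Hs) [:: Some i0]).1.
- exact: Amx_cont.
- apply: compW_cont; exact: ((smooth_W Hs) [:: Some i1]).1.
- exact: Amx_cont.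
Qed.

Lemma fW_RInt_der y j : is_derive (fun s => RInt (fun t => fW y j s t) t0 t1) 0
    (RInt (fun t => GW y j t) t0 t1).
Proof.
have E : RInt (fun t => GW y j t) t0 t1 = RInt (fun t => Derive (fun z => fW y j z t) 0) t0 t1.
  apply: RInt_ext => t _; rewrite (is_derive_unique _ _ _ (fW_der y j 0 t)) sh0 //.
rewrite E; apply: (is_derive_RInt_param (fun s t => fW y j s t)).
- exists (mkposreal _ Rlt_0_1) => s _ t _; eexists; exact: fW_der.
- move=> t _; apply: (continuity_2d_pt_ext (fun s t => GW (sh y j s) j t)) => [a b|].
    by rewrite (is_derive_unique _ _ _ (fW_der y j a b)).
  exact: GW_cont.
- exists (mkposreal _ Rlt_0_1) => s _; apply: ex_RInt_continuous => t _.
  exact: cont2d_snd (fW_cont y j s t).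
Qed.

Definition omb y := tavg t0 t1 (fun t => vort u (Fh t y) t).

Lemma omb_der y j s : is_derive (fun r => omb (sh y j r)) s (/ (t1 - t0) * RInt (fun t => GW (sh y j s) j t) t0 t1).
Proof.
apply: is_derive_shift.
apply: (is_derive_ext (fun r => / (t1 - t0) * RInt (fun t => fW (sh y j s) j r t) t0 t1)).
  move=> r; rewrite /omb /tavg /fW sh_sh //.
apply: is_derive_scal; exact: fW_RInt_der.
Qed.

End Omega.

From Stdlib Require Import IndefiniteDescription.
Section Unif.
Local Open Scope R_scope.

Lemma jcont_t (G : 'cV[R]_2 -> R -> R) y t : jcont G -> continuous (G y) t.
Proof.
move=> HG; apply/continuity_pt_filterlim => e He.
have [d [Hd Hdel]] := jcontE HG y t He.
exists d; split => // v [_ Hv]; apply: Hdel => // i.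
by rewrite Rminus_diag Rabs_R0.
Qed.

Lemma jcont_plus (F G : 'cV[R]_2 -> R -> R) : jcont F -> jcont G -> jcont (fun x t => F x t + G x t).
Proof.
move=> HF HG.
have := jcont_minus HF (jcont_minus (jcont_minus HG HG) HG).
have E : (fun x t => F x t - (G x t - G x t - G x t)) = (fun x t => F x t + G x t).
  apply: functional_extensionality => x; apply: functional_extensionality => t; ring.
by rewrite E.
Qed.

Lemma jcont_mult (F G : 'cV[R]_2 -> R -> R) : jcont F -> jcont G -> jcont (fun x t => F x t * G x t).
Proof.
move=> HF HG; apply: jcontI => y s eps He.
set M := Rabs (F y s) + Rabs (G y s) + 1.
have HM : 0 < M by rewrite /M; have := Rabs_pos (F y s); have := Rabs_pos (G y s); lra.
set e := Rmin 1 (eps / (2 * M)).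
have He' : 0 < e by apply: Rmin_pos; [lra | apply: Rdiv_lt_0_compat; lra].
have [d1 [Hd1 K1]] := jcontE HF y s He'.
have [d2 [Hd2 K2]] := jcontE HG y s He'.
exists (Rmin d1 d2); split; first exact: Rmin_pos.
move=> z r Hz Hr.
have m1 := Rmin_l d1 d2; have m2 := Rmin_r d1 d2.
have L1 : Rabs (F z r - F y s) < e by apply: K1; [move=> i; have := Hz i; lra | lra].
have L2 : Rabs (G z r - G y s) < e by apply: K2; [move=> i; have := Hz i; lra | lra].
have e1 : e <= 1 := Rmin_l _ _.
have e2 : e <= eps / (2 * M) := Rmin_r _ _.
have e3 : e * (2 * M) <= eps.
  have := Rmult_le_compat_r (2 * M) _ _ (ltac:(lra)) e2.
  by rewrite /Rdiv Rmult_assoc Rinv_l; lra.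
have -> : F z r * G z r - F y s * G y s = F z r * (G z r - G y s) + G y s * (F z r - F y s) by ring.
apply: Rle_lt_trans (Rabs_triang _ _) _; rewrite !Rabs_mult.
have Fz : Rabs (F z r) <= Rabs (F y s) + 1.
  have := Rabs_triang_inv (F z r) (F y s); lra.
have := Rabs_pos (F z r); have := Rabs_pos (G y s); have := Rabs_pos (F y s).
have := Rabs_pos (G z r - G y s); have := Rabs_pos (F z r - F y s).
rewrite /M in e3 *.
nra.
Qed.

Lemma jcont_comp (K : 'cV[R]_2 -> R -> R) (Phi : R -> 'cV[R]_2 -> 'cV[R]_2) :
  jcont K -> (forall i, jcont (fun y t => Phi t y i j0)) -> jcont (fun y t => K (Phi t y) t).
Proof.
move=> HK HP; apply: jcontI => y s eps He.
have [d [Hd Hdel]] := jcontE HK (Phi s y) s He.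
have [d0 [Hd0 K0]] := jcontE (HP i0) y s Hd.
have [d1 [Hd1 K1]] := jcontE (HP i1) y s Hd.
exists (Rmin d (Rmin d0 d1)); split; first by repeat apply: Rmin_pos.
move=> z r Hz Hr.
have m1 := Rmin_l d (Rmin d0 d1); have m2 := Rmin_r d (Rmin d0 d1).
have m3 := Rmin_l d0 d1; have m4 := Rmin_r d0 d1.
apply: Hdel; last lra.
apply: ord2P; [apply: K0 | apply: K1]; try lra; move=> i; have := Hz i; lra.
Qed.

Lemma unif (G : 'cV[R]_2 -> R -> R) (p : 'cV[R]_2) a b eps : jcont G -> a <= b -> 0 < eps ->
  exists d, 0 < d /\ forall y : 'cV[R]_2, (forall i, Rabs (y i j0 - p i j0) < d) ->
    forall t, a <= t <= b -> Rabs (G y t - G p t) < eps.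
Proof.
move=> HG Hab He.
have He2 : 0 < eps / 2 by lra.
pose df := fun τ => let (d, Hd) := constructive_indefinite_description _ (jcontE HG p τ He2) in mkposreal d (proj1 Hd).
have Hdf : forall τ, forall (z : 'cV[R]_2) r, (forall i, Rabs (z i j0 - p i j0) < df τ) -> Rabs (r - τ) < df τ ->
    Rabs (G z r - G p τ) < eps / 2.
  move=> τ; rewrite /df; case: constructive_indefinite_description => d [Hd K] /=; exact: K.
have [d Hd] := compactness_value_1d a b df.
exists d; split; first exact: cond_pos.
move=> y Hy t Ht.
apply: NNPP => Hn; apply: (Hd t Ht) => [[τ [Hτ [Htτ Hdτ]]]]; apply: Hn.
have A1 : Rabs (G y t - G p τ) < eps / 2.
  apply: Hdf; last exact: Htτ.
  move=> i; have := Hy i; lra.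
have A2 : Rabs (G p t - G p τ) < eps / 2.
  apply: Hdf; last exact: Htτ.
  move=> i; rewrite Rminus_diag Rabs_R0; exact: cond_pos.
have -> : G y t - G p t = (G y t - G p τ) - (G p t - G p τ) by ring.
apply: Rle_lt_trans (Rabs_triang _ _) _; rewrite Rabs_Ropp; lra.
Qed.

Lemma RInt_param_cont (G : 'cV[R]_2 -> R -> R) a b a0 b0 : jcont G -> a <= b ->
  continuity_2d_pt (fun x y => RInt (fun t => G (pt x y) t) a b) a0 b0.
Proof.
move=> HG Hab eps.
have Hep : 0 < eps / (b - a + 1) by apply: Rdiv_lt_0_compat; [apply: cond_pos | lra].
have [d [Hd K]] := unif (pt a0 b0) HG Hab Hep.
exists (mkposreal _ Hd) => x y /= Hx Hy.
have Ex : forall q, ex_RInt (fun t => G q t) a b.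
  move=> q; apply: ex_RInt_continuous => z _; exact: jcont_t.
have E : RInt (fun t => G (pt x y) t - G (pt a0 b0) t) a b = RInt (fun t => G (pt x y) t) a b - RInt (fun t => G (pt a0 b0) t) a b.
  exact: (RInt_minus _ _ _ _ (Ex (pt x y)) (Ex (pt a0 b0))).
rewrite -E.
have Bd : forall t, a <= t <= b -> Rabs (G (pt x y) t - G (pt a0 b0) t) <= eps / (b - a + 1).
  move=> t Ht; apply: Rlt_le; apply: K => //.
  by apply: ord2P; rewrite !mxE.
have := abs_RInt_le_const _ a b _ Hab (ex_RInt_minus _ _ _ _ (Ex (pt x y)) (Ex (pt a0 b0))) Bd.
move=> HH; apply: Rle_lt_trans HH _.
have He := cond_pos eps.
have : (b - a) * (eps / (b - a + 1)) < eps.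
  rewrite /Rdiv -Rmult_assoc.
  apply: (Rmult_lt_reg_r (b - a + 1)); first lra.
  rewrite Rmult_assoc Rinv_l; lra.
done.
Qed.

End Unif.

Section Inv33.
Local Open Scope R_scope.

Lemma ord3P (P : 'I_3 -> Prop) : P k0 -> P k1 -> P k2 -> forall i, P i.
Proof. move=> H0 H1 H2 [[|[|[|k]]] Hk] //.
- by have -> : Ordinal Hk = k0 by apply: val_inj.
- by have -> : Ordinal Hk = k1 by apply: val_inj.
- by have -> : Ordinal Hk = k2 by apply: val_inj.
Qed.

Lemma sum3 (f : 'I_3 -> R) : (\sum_(k < 3) f k)%ring = f k0 + f k1 + f k2.
Proof.
rewrite !big_ord_recl big_ord0.
have -> : lift ord0 ord0 = k1 by apply: val_inj.
have -> : lift ord0 (lift ord0 ord0) = k2 :> 'I_3 by apply: val_inj.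
rewrite addr0 -!RplusE /k0; exact: (esym (Rplus_assoc _ _ _)).
Qed.

Lemma inv33 (M : 'M[R]_3) (w : 'cV[R]_3) :
  M k0 k2 = 0 -> M k1 k2 = 0 -> M k2 k2 = 1 -> M k0 k0 * M k1 k1 - M k0 k1 * M k1 k0 = 1 ->
  (invmx M *m w) k0 j0 = M k1 k1 * w k0 j0 - M k0 k1 * w k1 j0 /\
  (invmx M *m w) k1 j0 = - M k1 k0 * w k0 j0 + M k0 k0 * w k1 j0.
Proof.
move=> H02 H12 H22 Hdet.
set a := M k0 k0; set b := M k0 k1; set c := M k1 k0; set d := M k1 k1; set e := M k2 k0; set f := M k2 k1.
have Hd' : a * d - b * c = 1 := Hdet.
pose nf (i j : 'I_3) : R :=
  if i == k0 then (if j == k0 then d else if j == k1 then - b else 0)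
  else if i == k1 then (if j == k0 then - c else if j == k1 then a else 0)
  else (if j == k0 then c * f - d * e else if j == k1 then b * e - a * f else 1).
pose N : 'M[R]_3 := \matrix_(i, j) nf i j.
have MN : (M *m N = 1%:M)%ring.
  apply/matrixP => i j; rewrite !mxE sum3 !mxE /nf /=.
  move: i j; apply: ord3P; apply: ord3P; rewrite /= -/a -/b -/c -/d -/e -/f ?H02 ?H12 ?H22 /=;
  rewrite ?mulr1n ?mulr0n -?RplusE -?RmultE -?RoppE -?R0E -?R1E; nra.
have [uM _] := mulmx1_unit MN.
have E : invmx M = N by rewrite -(mulKmx uM N) MN mulmx1.
rewrite E !mxE !sum3 !mxE /nf /=.
rewrite -!RmultE; split; ring.
Qed.

End Inv33.

Section Flow3.
Local Open Scope R_scope.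
Variables (t0 t1 : R) (u : 'cV[R]_2 -> R -> 'cV[R]_2) (Fh : R -> 'cV[R]_2 -> 'cV[R]_2)
  (F : R -> 'cV[R]_3 -> 'cV[R]_3).
Hypothesis Hs : forall i, smooth (U u i).
Hypothesis Hinc : incompressible2 u.
Hypothesis Hfl : flow_map t0 u Fh.
Hypothesis Hfl3 : flow_map t0 (lift3 u) F.

Lemma proj3F t x0 : proj3 (F t x0) = Fh t (proj3 x0).
Proof.
have HC0 := smooth_C1 (Hs i0); have HC1 := smooth_C1 (Hs i1).
have Da : forall k, k = i0 \/ k = i1 -> forall t, is_derive (fun t => F t x0 (widen_ord (isT : (2 <= 3)%N) k) j0) t
    (U u k (pt (F t x0 k0 j0) (F t x0 k1 j0)) t).
  move=> k Hk t'; have := Hfl3.2.1 x0 t' (widen_ord (isT : (2 <= 3)%N) k).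
  rewrite -proj3_pt /U.
  by case: Hk => ->; rewrite mxE.
have Db : forall k, forall t, is_derive (fun t => Fh t (proj3 x0) k j0) t
    (U u k (pt (Fh t (proj3 x0) i0 j0) (Fh t (proj3 x0) i1 j0)) t).
  move=> k t'; rewrite pt_eta; exact: (Hfl.2.1 (proj3 x0) t' k).
have W0 : widen_ord (isT : (2 <= 3)%N) i0 = k0 by apply: val_inj.
have W1 : widen_ord (isT : (2 <= 3)%N) i1 = k1 by apply: val_inj.
have Da0 := Da i0 (or_introl erefl); have Da1 := Da i1 (or_intror erefl).
rewrite W0 in Da0; rewrite W1 in Da1.
have I0 : F t0 x0 k0 j0 = Fh t0 (proj3 x0) i0 j0 by rewrite (Hfl3.1 x0) (Hfl.1 (proj3 x0)) proj3E0.
have I1 : F t0 x0 k1 j0 = Fh t0 (proj3 x0) i1 j0 by rewrite (Hfl3.1 x0) (Hfl.1 (proj3 x0)) proj3E1.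
have [E0 E1] := ode_unique HC0 HC1 Da0 Da1 (Db i0) (Db i1) I0 I1 t.
by rewrite proj3_pt E0 E1 pt_eta.
Qed.

Lemma F_k0 t y : F t y k0 j0 = Fh t (proj3 y) i0 j0.
Proof. by rewrite -proj3E0 proj3F. Qed.
Lemma F_k1 t y : F t y k1 j0 = Fh t (proj3 y) i1 j0.
Proof. by rewrite -proj3E1 proj3F. Qed.

Lemma F2_shift t x0 r : F t (sh x0 k2 r) k2 j0 = F t x0 k2 j0 + r.
Proof.
suff : F t (sh x0 k2 r) k2 j0 - F t x0 k2 j0 = F t0 (sh x0 k2 r) k2 j0 - F t0 x0 k2 j0.
  rewrite !(Hfl3.1) shE /= -RplusE; lra.
apply: (deriv0_const (f := fun t => F t (sh x0 k2 r) k2 j0 - F t x0 k2 j0)) => s.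
have D := is_derive_minus _ _ _ _ _ (Hfl3.2.1 (sh x0 k2 r) s k2) (Hfl3.2.1 x0 s k2).
rewrite !lift3E2 !proj3F proj3_sh2 /minus /plus /opp /= in D.
rewrite Rplus_opp_r in D; exact: D.
Qed.

Lemma jacE t x0 i j : jac (F t) x0 i j = pdir j (fun y => F t y i j0) x0.
Proof. by rewrite mxE. Qed.

Lemma Fk0_fun t : (fun y => F t y k0 j0) = (fun y => (fun z => Fh t z i0 j0) (proj3 y)).
Proof. apply: functional_extensionality => y; exact: F_k0. Qed.
Lemma Fk1_fun t : (fun y => F t y k1 j0) = (fun y => (fun z => Fh t z i1 j0) (proj3 y)).
Proof. apply: functional_extensionality => y; exact: F_k1. Qed.

Lemma jac_facts t x0 :
  jac (F t) x0 k0 k2 = 0 /\ jac (F t) x0 k1 k2 = 0 /\ jac (F t) x0 k2 k2 = 1 /\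
      jac (F t) x0 k0 k0 = Amx Fh t (proj3 x0) i0 i0 /\ jac (F t) x0 k0 k1 = Amx Fh t (proj3 x0) i0 i1 /\
      jac (F t) x0 k1 k0 = Amx Fh t (proj3 x0) i1 i0 /\ jac (F t) x0 k1 k1 = Amx Fh t (proj3 x0) i1 i1.
Proof.
rewrite !jacE Fk0_fun Fk1_fun.
rewrite (pdir3_2 (fun z => Fh t z i0 j0)) (pdir3_2 (fun z => Fh t z i1 j0)).
rewrite (pdir3_0 (fun z => Fh t z i0 j0)) (pdir3_1 (fun z => Fh t z i0 j0)).
rewrite (pdir3_0 (fun z => Fh t z i1 j0)) (pdir3_1 (fun z => Fh t z i1 j0)).
do ! split => //.
rewrite /pdir (Derive_ext _ (fun s => F t x0 k2 j0 + s)); last first.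
  move=> s; rewrite -/(sh x0 k2 s); exact: F2_shift.
apply: is_derive_unique; auto_derive; [done|ring].
Qed.

Lemma pullback_top t x0 :
  pullback F (lapv (lift3 u)) t x0 k0 j0 = - GW u Fh (proj3 x0) i1 t /\
  pullback F (lapv (lift3 u)) t x0 k1 j0 = GW u Fh (proj3 x0) i0 t.
Proof.
have [H02 [H12 [H22 [E00 [E01 [E10 E11]]]]]] := jac_facts t x0.
have Hdet : jac (F t) x0 k0 k0 * jac (F t) x0 k1 k1 - jac (F t) x0 k0 k1 * jac (F t) x0 k1 k0 = 1.
  rewrite E00 E01 E10 E11; exact: (detA_const Hs Hinc Hfl).
have [P0 P1] := inv33 (lapv (lift3 u) (F t x0) t) H02 H12 H22 Hdet.
rewrite /pullback P0 P1 lapv3_0 lapv3_1 lapU0 // lapU1 // proj3F E00 E01 E10 E11 /GW.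
split; ring.
Qed.

End Flow3.

Section Final.
Local Open Scope R_scope.
Variables (rho nu t0 t1 : R) (u : 'cV[R]_2 -> R -> 'cV[R]_2) (Fh : R -> 'cV[R]_2 -> 'cV[R]_2)
  (F : R -> 'cV[R]_3 -> 'cV[R]_3).
Hypothesis Ht : t0 < t1.
Hypothesis Hs : forall i, smooth (U u i).
Hypothesis Hinc : incompressible2 u.
Hypothesis Hfl : flow_map t0 u Fh.
Hypothesis Hfl3 : flow_map t0 (lift3 u) F.

Lemma jcont_GW j : jcont (fun y t => GW u Fh y j t).
Proof.
have HW k : jcont (fun y t => pdx (Some k) (W u) (Fh t y) t).
  apply: (jcont_comp (K := pdx (Some k) (W u)) (Phi := Fh)).
    exact: ((smooth_W Hs) [:: Some k]).1.
  move=> i; exact: ((FH_smooth Hfl i) [::]).1.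
have HA k : jcont (fun y t => Amx Fh t y k j) by exact: ((FH_smooth Hfl k) [:: Some j]).1.
exact: (jcont_plus (jcont_mult (HW i0) (HA i0)) (jcont_mult (HW i1) (HA i1))).
Qed.

Lemma pdir_omb y j : pdir j (omb t0 t1 u Fh) y = / (t1 - t0) * RInt (fun t => GW u Fh y j t) t0 t1.
Proof.
have := is_derive_unique _ _ _ (omb_der t1 Hs Hfl y j 0).
by rewrite sh0.
Qed.

Lemma matE (V : 'cV[R]_3 -> R -> 'cV[R]_3) x0 i :
  material_barrier_field rho nu t0 t1 F V x0 i j0 = (nu * rho * tavg t0 t1 (fun t => pullback F (lapv V) t x0 i j0))%ring.
Proof. by rewrite /material_barrier_field [LHS]mxE mxE. Qed.

Lemma ex_GW y j : ex_RInt (fun t => GW u Fh y j t) t0 t1.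
Proof. apply: (ex_RInt_continuous (V := R_CompleteNormedModule)) => z _; exact: (@jcont_t (fun y t => GW u Fh y j t) y z (jcont_GW j)). Qed.

Lemma material_part x0 :
  proj3 (material_barrier_field rho nu t0 t1 F (lift3 u) x0)
  = (- (nu * rho) *: (Jmx *m grad (omb t0 t1 u Fh) (proj3 x0)))%ring.
Proof.
apply/matrixP => i j; rewrite (ord1 j); move: i; apply: ord2P.
- rewrite proj3E0 matE mxE Jmv0 mxE pdir_omb.
  rewrite /tavg (RInt_ext _ (fun t => - GW u Fh (proj3 x0) i1 t)); last first.
    move=> t _; exact: (pullback_top Hs Hinc Hfl Hfl3 t x0).1.
  have -> : RInt (fun t => - GW u Fh (proj3 x0) i1 t) t0 t1 = - RInt (fun t => GW u Fh (proj3 x0) i1 t) t0 t1.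
    exact: (RInt_opp _ _ _ (ex_GW (proj3 x0) i1)).
  rewrite -!RmultE -!RoppE; ring.
- rewrite proj3E1 matE mxE Jmv1 mxE pdir_omb.
  rewrite /tavg (RInt_ext _ (fun t => GW u Fh (proj3 x0) i0 t)); last first.
    move=> t _; exact: (pullback_top Hs Hinc Hfl Hfl3 t x0).2.
  rewrite -!RmultE -!RoppE; ring.
Qed.

Lemma omb_diff a b : differentiable_pt_lim (fun a b => omb t0 t1 u Fh (pt a b)) a b
   (pdir i0 (omb t0 t1 u Fh) (pt a b)) (pdir i1 (omb t0 t1 u Fh) (pt a b)).
Proof.
pose H := fun (y : 'cV[R]_2) (_ : R) => omb t0 t1 u Fh y.
have E1 : forall a b, Derive (fun z => omb t0 t1 u Fh (pt z b)) a = pdir i0 (omb t0 t1 u Fh) (pt a b).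
  move=> a' b'; exact: (D1_pt H 0 a' b').
have E2 : forall a b, Derive (fun z => omb t0 t1 u Fh (pt a z)) b = pdir i1 (omb t0 t1 u Fh) (pt a b).
  move=> a' b'; exact: (D2_pt H 0 a' b').
rewrite -E1 -E2; apply: C1_diff.
- move=> a' b'; apply/(ex1_pt H 0 a' b'); eexists; exact: (omb_der t1 Hs Hfl (pt a' b') i0 0).
- move=> a' b'; apply/(ex2_pt H 0 a' b'); eexists; exact: (omb_der t1 Hs Hfl (pt a' b') i1 0).
- apply: (continuity_2d_pt_ext (fun a b => / (t1 - t0) * RInt (fun t => GW u Fh (pt a b) i0 t) t0 t1)).
    by move=> a' b'; rewrite E1 pdir_omb.
  apply: continuity_2d_pt_mult; first exact: continuity_2d_pt_const.
  apply: (RInt_param_cont (G := fun y t => GW u Fh y i0 t)); [exact: jcont_GW | lra].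
- apply: (continuity_2d_pt_ext (fun a b => / (t1 - t0) * RInt (fun t => GW u Fh (pt a b) i1 t) t0 t1)).
    by move=> a' b'; rewrite E2 pdir_omb.
  apply: continuity_2d_pt_mult; first exact: continuity_2d_pt_const.
  apply: (RInt_param_cont (G := fun y t => GW u Fh y i1 t)); [exact: jcont_GW | lra].
Qed.

Lemma material_traj (gamma : R -> 'cV[R]_3) :
  trajectory (material_barrier_field rho nu t0 t1 F (lift3 u)) gamma ->
  forall s1 s2, omb t0 t1 u Fh (proj3 (gamma s1)) = omb t0 t1 u Fh (proj3 (gamma s2)).
Proof.
move=> Htr s1 s2; rewrite !proj3_pt.
suff HH : forall s, is_derive (fun s => omb t0 t1 u Fh (pt (gamma s k0 j0) (gamma s k1 j0))) s 0.
  exact: (deriv0_const s1 s2 HH).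
move=> s.
have V0 : material_barrier_field rho nu t0 t1 F (lift3 u) (gamma s) k0 j0
    = - (nu * rho) * pdir i1 (omb t0 t1 u Fh) (proj3 (gamma s)).
  rewrite -proj3E0 material_part mxE Jmv0 mxE //.
have V1 : material_barrier_field rho nu t0 t1 F (lift3 u) (gamma s) k1 j0
    = - (nu * rho) * - pdir i0 (omb t0 t1 u Fh) (proj3 (gamma s)).
  rewrite -proj3E1 material_part mxE Jmv1 mxE //.
have D0 := Htr s k0; have D1 := Htr s k1.
rewrite V0 in D0; rewrite V1 in D1.
have OD := omb_diff (gamma s k0 j0) (gamma s k1 j0).
have := derivable_pt_lim_comp_2d _ _ _ _ _ _ _ _
   OD (proj1 (is_derive_Reals _ _ _) D0) (proj1 (is_derive_Reals _ _ _) D1).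
rewrite -proj3_pt => HD.
have := proj2 (is_derive_Reals _ _ _) HD.
match goal with |- is_derive _ _ ?L -> _ => have -> : L = 0 end; first by ring.
done.
Qed.

End Final.

Theorem theorem5 (rho nu t0 t1 : R)
  (u : 'cV[R]_2 -> R -> 'cV[R]_2) (p : 'cV[R]_2 -> R -> R)
  (Fh : R -> 'cV[R]_2 -> 'cV[R]_2) (F : R -> 'cV[R]_3 -> 'cV[R]_3) :
  0 < rho -> 0 < nu -> t0 < t1 ->
  (forall i, smooth (fun x t => u x t i j0)) -> smooth p ->
  incompressible2 u -> navier_stokes2 rho nu u p ->
  flow_map t0 u Fh -> flow_map t0 (lift3 u) F ->
  let omegabar := fun y : 'cV[R]_2 => tavg t0 t1 (fun t => vort u (Fh t y) t) in
  (* xhat-components of the material barrier equation: Hamiltonian form *)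
  (forall x0 : 'cV[R]_3,
     proj3 (material_barrier_field rho nu t0 t1 F (lift3 u) x0)
     = - (nu * rho) *: (Jmx *m grad omegabar (proj3 x0))) /\
  (* xhat-components of the instantaneous barrier equation: Hamiltonian form *)
  (forall (t : R) (x : 'cV[R]_3),
     proj3 (inst_barrier_field rho nu t (lift3 u) x)
     = - (nu * rho) *: (Jmx *m grad (fun y => vort u y t) (proj3 x))) /\
  (* invariant curves of the material barrier eq. lie in level sets of omegabar *)
  (forall gamma : R -> 'cV[R]_3,
     trajectory (material_barrier_field rho nu t0 t1 F (lift3 u)) gamma ->
     forall s1 s2, omegabar (proj3 (gamma s1)) = omegabar (proj3 (gamma s2))) /\
  (* invariant curves of the instantaneous barrier eq. lie in level sets of omega(.,t) *)
  (forall (t : R) (gamma : R -> 'cV[R]_3),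
     trajectory (inst_barrier_field rho nu t (lift3 u)) gamma ->
     forall s1 s2, vort u (proj3 (gamma s1)) t = vort u (proj3 (gamma s2)) t).
Proof.
move=> Hrho Hnu /RltP Ht01 Hs Hp Hinc Hns Hfl Hfl3 omegabar.
have Hs' : forall i, smooth (U u i) := Hs.
split; [|split; [|split]].
- move=> x0; exact: (material_part rho nu t1 Hs' Hinc Hfl Hfl3 x0).
- move=> t x; exact: (inst_part rho nu Hs' Hinc t x).
- move=> gamma Htr s1 s2; exact: (material_traj Ht01 Hs' Hinc Hfl Hfl3 Htr s1 s2).
- move=> t gamma Htr s1 s2; exact: (inst_traj Hs' Hinc Htr s1 s2).
Qed.
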